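(* Let $n\geq 1$ be an integer, let $\mu\in\mathbb{C}$ with $\mu\neq 0$ and $\operatorname{Re}(\mu)<n$, and let $\lambda\in\mathbb{C}$ with $0<|\lambda|\leq 1$. Suppose $p\in\mathcal{H}[1,n]$ satisfies $$p(z)-\frac{1}{\mu}\,z p'(z)\prec 1+\lambda z \qquad (z\in\mathbb{U}).$$ Then $p(z)\prec 1+\lambda_1 z$ $(z\in\mathbb{U})$ for every complex number $\lambda_1$ with $$|\lambda_1|=|\lambda|\,\frac{|\mu|}{|n-\mu|};$$ equivalently, $|p(z)-1|<|\lambda|\,|\mu|/|n-\mu|$ for all $z\in\mathbb{U}$.
   Context: $\mathbb{U}=\{z\in\mathbb{C}:|z|<1\}$. For $a_0\in\mathbb{C}$ and an integer $n\geq1$, $\mathcal{H}[a_0,n]$ denotes the class of functions analytic in $\mathbb{U}$ of the form $p(z)=a_0+\sum_{k=n}^\infty a_k z^k$. For $f,g$ analytic in $\mathbb{U}$, $f\prec g$ ($f$ is subordinate to $g$) means there is an analytic $w$ in $\mathbb{U}$ with $w(0)=0$, $|w(z)|<1$ on $\mathbb{U}$, and $f(z)=g(w(z))$; when $g$ is univalent this is equivalent to $f(0)=g(0)$ and $f(\mathbb{U})\subset g(\mathbb{U})$. In particular, for $\lambda\neq 0$, $q\prec 1+\lambda z$ means $q(0)=1$ and $|q(z)-1|<|\lambda|$ on $\mathbb{U}$. *)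

(* Defs.v *)
From Stdlib Require Export Reals.
Open Scope R_scope.

Definition Cx : Type := (R * R)%type.
Definition RtoC (x : R) : Cx := (x, 0).
Definition Cz0 : Cx := (0, 0).
Definition Cone : Cx := (1, 0).
Definition Cadd (z w : Cx) : Cx := (fst z + fst w, snd z + snd w).
Definition Copp (z : Cx) : Cx := (- fst z, - snd z).
Definition Csub (z w : Cx) : Cx := Cadd z (Copp w).
Definition Cmul (z w : Cx) : Cx :=
  (fst z * fst w - snd z * snd w, fst z * snd w + snd z * fst w).
Definition Cinv (z : Cx) : Cx :=
  (fst z / (fst z ^ 2 + snd z ^ 2), - snd z / (fst z ^ 2 + snd z ^ 2)).
Definition Cdiv (z w : Cx) : Cx := Cmul z (Cinv w).
Definition Re (z : Cx) : R := fst z.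
Definition Cmod (z : Cx) : R := sqrt (fst z ^ 2 + snd z ^ 2).
Fixpoint Cpow (z : Cx) (k : nat) : Cx :=
  match k with O => Cone | S k' => Cmul z (Cpow z k') end.

Fixpoint Csum (f : nat -> Cx) (N : nat) : Cx :=
  match N with O => f O | S N' => Cadd (Csum f N') (f (S N')) end.

Definition Cseries_cv (f : nat -> Cx) (l : Cx) : Prop :=
  Un_cv (fun N => fst (Csum f N)) (fst l) /\ Un_cv (fun N => snd (Csum f N)) (snd l).

Definition inU (z : Cx) : Prop := Cmod z < 1.

Definition analytic_U (f : Cx -> Cx) : Prop :=
  exists a : nat -> Cx, forall z, inU z -> Cseries_cv (fun k => Cmul (a k) (Cpow z k)) (f z).

Definition in_H (a0 : Cx) (n : nat) (p : Cx -> Cx) : Prop :=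
  exists a : nat -> Cx,
    a O = a0 /\ (forall k, (1 <= k < n)%nat -> a k = Cz0) /\
    (forall z, inU z -> Cseries_cv (fun k => Cmul (a k) (Cpow z k)) (p z)).

Definition Cderiv_at (f : Cx -> Cx) (z l : Cx) : Prop :=
  forall eps, 0 < eps -> exists delta, 0 < delta /\
    forall h, 0 < Cmod h < delta ->
      Cmod (Csub (Cdiv (Csub (f (Cadd z h)) (f z)) h) l) < eps.

Definition subord (f g : Cx -> Cx) : Prop :=
  exists w : Cx -> Cx, analytic_U w /\ w Cz0 = Cz0 /\
    (forall z, inU z -> Cmod (w z) < 1) /\
    (forall z, inU z -> f z = g (w z)).

(* Main.v *)
Require Import Defs.
From Stdlib Require Import Reals Lra Lia Psatz ClassicalEpsilon.
Require Coquelicot.Complex.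
Open Scope R_scope.

Ltac cdes := repeat match goal with
  | z : Cx |- _ => let a := fresh "a" in let b := fresh "b" in destruct z as [a b]
  end.
Ltac ceq := cdes; unfold Cadd, Cmul, Csub, Copp, Cinv, Cdiv, RtoC, Cone, Cz0 in *;
  simpl; apply injective_projections; simpl.

Lemma Cmod_mul z w : Cmod (Cmul z w) = Cmod z * Cmod w.
Proof. exact (Complex.Cmod_mult z w). Qed.
Lemma Cmod_add z w : Cmod (Cadd z w) <= Cmod z + Cmod w.
Proof. exact (Complex.Cmod_triangle z w). Qed.
Lemma Cmod_ge0 z : 0 <= Cmod z.
Proof. exact (Complex.Cmod_ge_0 z). Qed.
Lemma Cmod_opp z : Cmod (Copp z) = Cmod z.
Proof. exact (Complex.Cmod_opp z). Qed.
Lemma Cmod_sq z : Cmod z ^ 2 = fst z ^ 2 + snd z ^ 2.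
Proof. unfold Cmod. rewrite pow2_sqrt; [auto|nra]. Qed.
Lemma Cmod_sq' z : Cmod z * Cmod z = fst z ^ 2 + snd z ^ 2.
Proof. rewrite <- Cmod_sq. ring. Qed.
Lemma Cmod_fst z : Rabs (fst z) <= Cmod z.
Proof. rewrite <- sqrt_Rsqr_abs. unfold Cmod, Rsqr. apply sqrt_le_1; nra. Qed.
Lemma Cmod_snd z : Rabs (snd z) <= Cmod z.
Proof. rewrite <- sqrt_Rsqr_abs. unfold Cmod, Rsqr. apply sqrt_le_1; nra. Qed.
Lemma Cmod_pow z k : Cmod (Cpow z k) = Cmod z ^ k.
Proof. induction k.
  - unfold Cpow. rewrite pow_O. unfold Cmod, Cone; cbn [fst snd].
    replace (1^2+0^2) with 1 by ring. apply sqrt_1.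
  - simpl Cpow. rewrite Cmod_mul, IHk. simpl. ring. Qed.
Lemma Cmod_RtoC x : Cmod (RtoC x) = Rabs x.
Proof. exact (Complex.Cmod_R x). Qed.
Lemma Cmod_sub_sym z w : Cmod (Csub z w) = Cmod (Csub w z).
Proof. replace (Csub z w) with (Copp (Csub w z)) by (ceq; ring). apply Cmod_opp. Qed.
Lemma Cmod_eq0 z : Cmod z = 0 -> z = Cz0.
Proof. intro H. exact (Complex.Cmod_eq_0 z H). Qed.
Lemma Cmod_pos z : z <> Cz0 -> 0 < Cmod z.
Proof. intro H. destruct (Cmod_ge0 z) as [h|h]; auto. exfalso; apply H, Cmod_eq0; auto. Qed.
Lemma Cmod_inv z : z <> Cz0 -> Cmod (Cinv z) = / Cmod z.
Proof. intro H. exact (Complex.Cmod_inv z H). Qed.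
Lemma Cmod_z0 : Cmod Cz0 = 0.
Proof. unfold Cmod, Cz0; cbn [fst snd]. replace (0^2+0^2) with 0 by ring. apply sqrt_0. Qed.
Lemma Cmod_sub_tri z w : Cmod (Csub z w) <= Cmod z + Cmod w.
Proof. unfold Csub. rewrite <- (Cmod_opp w). apply Cmod_add. Qed.
Lemma Cmod_rev z w : Cmod z - Cmod w <= Cmod (Csub z w).
Proof. replace z with (Cadd (Csub z w) w) at 1 by (ceq; ring).
  pose proof (Cmod_add (Csub z w) w). lra. Qed.
Lemma Cmod_Cx a b : Cmod (a, b) = sqrt (a^2 + b^2).
Proof. reflexivity. Qed.
Lemma Cmod_le_sq z w : Cmod z <= Cmod w <-> fst z ^2 + snd z^2 <= fst w^2 + snd w^2.
Proof. split; intro H.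
 - rewrite <- !Cmod_sq. pose proof (Cmod_ge0 z). nra.
 - unfold Cmod. apply sqrt_le_1; nra. Qed.
Definition Ccv (u : nat -> Cx) (l : Cx) :=
  Un_cv (fun N => fst (u N)) (fst l) /\ Un_cv (fun N => snd (u N)) (snd l).

Lemma Ccv_unique u l1 l2 : Ccv u l1 -> Ccv u l2 -> l1 = l2.
Proof. intros [a b] [c d]. apply injective_projections; eapply UL_sequence; eauto. Qed.

Lemma CV_const c : Un_cv (fun _ => c) c.
Proof. intros e he. exists 0%nat. intros. unfold Rdist. rewrite Rminus_diag, Rabs_R0; lra. Qed.

Lemma Ccv_add u v l m : Ccv u l -> Ccv v m -> Ccv (fun N => Cadd (u N) (v N)) (Cadd l m).
Proof. intros [a b] [c d]. split; simpl; apply CV_plus; auto. Qed.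

Lemma Ccv_mulc c u l : Ccv u l -> Ccv (fun N => Cmul c (u N)) (Cmul c l).
Proof. intros [a b]. unfold Cmul. split; simpl.
 - apply CV_minus; apply CV_mult; auto; apply CV_const.
 - apply CV_plus; apply CV_mult; auto; apply CV_const. Qed.

Lemma Ccv_opp u l : Ccv u l -> Ccv (fun N => Copp (u N)) (Copp l).
Proof. intros [a b]. split; simpl; apply CV_opp; auto. Qed.

Lemma Ccv_sub u v l m : Ccv u l -> Ccv v m -> Ccv (fun N => Csub (u N) (v N)) (Csub l m).
Proof. intros. apply Ccv_add; auto. apply Ccv_opp; auto. Qed.

Lemma Ccv_const c : Ccv (fun _ => c) c.
Proof. split; apply CV_const. Qed.

Lemma Un_cv_ev (u v : nat -> R) l N0 : (forall N, (N >= N0)%nat -> u N = v N) -> Un_cv u l -> Un_cv v l.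
Proof. intros H Hu e he. destruct (Hu e he) as [N HN]. exists (max N N0). intros n Hn.
  rewrite <- H by lia. apply HN; lia. Qed.

Lemma Ccv_ev u v l N0 : (forall N, (N >= N0)%nat -> u N = v N) -> Ccv u l -> Ccv v l.
Proof. intros H [a b]. split.
  - apply (Un_cv_ev (fun N => fst (u N)) _ _ N0); auto. intros N HN; rewrite H; auto.
  - apply (Un_cv_ev (fun N => snd (u N)) _ _ N0); auto. intros N HN; rewrite H; auto. Qed.

Lemma Un_cv_shift (u : nat -> R) l m : Un_cv u l -> Un_cv (fun N => u (N + m)%nat) l.
Proof. intros Hu e he. destruct (Hu e he) as [N HN]. exists N. intros n Hn. apply HN; lia. Qed.

Lemma Ccv_shift u l m : Ccv u l -> Ccv (fun N => u (N + m)%nat) l.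
Proof. intros [a b]; split; apply (Un_cv_shift (fun N => _ (u N))); auto. Qed.

Lemma Ccv_bound u l B : (forall N, Cmod (u N) <= B) -> Ccv u l -> Cmod l <= B.
Proof. intros H [a b].
  assert (HB : 0 <= B) by (specialize (H 0%nat); pose proof (Cmod_ge0 (u 0%nat)); lra).
  assert (H1 : forall N, fst (u N) ^2 + snd (u N)^2 <= B^2).
  { intro N. rewrite <- Cmod_sq. specialize (H N). pose proof (Cmod_ge0 (u N)). nra. }
  assert (H2 : Un_cv (fun N => fst (u N) ^2 + snd (u N)^2) (fst l ^2 + snd l ^2)).
  { apply CV_plus; apply (CV_mult _ _ _ _ a) || apply (CV_mult _ _ _ _ b);
      [apply CV_mult; auto; apply CV_const | ..];
    first [apply (CV_mult _ _ _ _ a) | apply (CV_mult _ _ _ _ b)]; apply CV_const. }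
  assert (Hl : fst l ^2 + snd l ^2 <= B^2).
  { exact (@Rle_cv_lim _ (fun _ => B^2) _ _ H1 H2 (CV_const _)). }
  unfold Cmod. rewrite <- (sqrt_pow2 B HB). apply sqrt_le_1; nra. Qed.

Lemma Csum_fst f N : fst (Csum f N) = sum_f_R0 (fun k => fst (f k)) N.
Proof. induction N; simpl; auto. rewrite IHN; auto. Qed.
Lemma Csum_snd f N : snd (Csum f N) = sum_f_R0 (fun k => snd (f k)) N.
Proof. induction N; simpl; auto. rewrite IHN; auto. Qed.

Lemma series_nonneg_ex (u : nat -> R) C q : 0 <= q < 1 ->
  (forall k, 0 <= u k <= C * q ^ k) -> exists l, Un_cv (fun N => sum_f_R0 u N) l.
Proof. intros Hq H.
  assert (G : {l | Un_cv (fun N => sum_f_R0 (fun k => C * q ^ k) N) l}).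
  { exists (C * / (1 - q)).
    assert (P := GP_infinite q ltac:(rewrite Rabs_right; lra)).
    unfold Pser, infinite_sum in P.
    apply (Un_cv_ev (fun N => C * sum_f_R0 (fun k => 1 * q ^ k) N)) with 0%nat.
    - intros N _. rewrite scal_sum. apply sum_eq. intros; ring.
    - apply CV_mult; [apply CV_const| exact P]. }
  destruct (Rseries_CV_comp u _ H G) as [l Hl]. eauto. Qed.

Lemma series_abs_ex (u : nat -> R) C q : 0 <= q < 1 ->
  (forall k, Rabs (u k) <= C * q ^ k) -> exists l, Un_cv (fun N => sum_f_R0 u N) l.
Proof. intros Hq H.
  destruct (series_nonneg_ex (fun k => (Rabs (u k) + u k)/2) C q Hq) as [l1 H1].
  { intro k. specialize (H k). split; unfold Rabs in *; destruct Rcase_abs; lra. }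
  destruct (series_nonneg_ex (fun k => (Rabs (u k) - u k)/2) C q Hq) as [l2 H2].
  { intro k. specialize (H k). split; unfold Rabs in *; destruct Rcase_abs; lra. }
  exists (l1 - l2). apply (Un_cv_ev (fun N => sum_f_R0 (fun k => (Rabs (u k) + u k)/2) N -
     sum_f_R0 (fun k => (Rabs (u k) - u k)/2) N)) with 0%nat.
  - intros N _. rewrite <- minus_sum. apply sum_eq. intros; field.
  - apply CV_minus; auto. Qed.
Definition rad1 (b : nat -> Cx) := forall rho, 0 <= rho < 1 ->
  exists C, forall k, Cmod (b k) * rho ^ k <= C.
Definition psum (b : nat -> Cx) z := Csum (fun k => Cmul (b k) (Cpow z k)).
Definition SF (b : nat -> Cx) (z : Cx) : Cx :=
  epsilon (inhabits Cz0) (fun l => Cseries_cv (fun k => Cmul (b k) (Cpow z k)) l).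
Definition der (b : nat -> Cx) k := Cmul (RtoC (INR (S k))) (b (S k)).

Lemma poly_geo x k : 0 <= x < 1 -> (INR k + 1) * x ^ k <= / (1 - x).
Proof. intro Hx.
  assert (H : (INR k + 1) * x ^ k - INR k * x ^ (S k) <= 1).
  { induction k. simpl. lra.
    rewrite S_INR. simpl pow in *.
    assert (0 <= x ^ k) by (apply pow_le; lra).
    assert (0 <= INR k) by apply pos_INR.
    assert ((INR k + 1 + 1) * (x * x ^ k) - (INR k + 1) * (x * (x * x ^ k)) <=
            (INR k + 1) * x ^ k - INR k * (x * x ^ k)).
    { assert (0 <= (INR k + 1) * x ^ k * ((1 - x) * (1 - x))) by
        (apply Rmult_le_pos; [apply Rmult_le_pos; lra| nra]). nra. }
    lra. }
  assert (0 <= x ^ k) by (apply pow_le; lra).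
  assert (0 <= INR k) by apply pos_INR.
  apply Rmult_le_reg_r with (1 - x). lra.
  rewrite Rinv_l by lra. simpl pow in H. nra. Qed.

Lemma geo_sum_le C q N : 0 <= C -> 0 <= q < 1 -> sum_f_R0 (fun k => C * q ^ k) N <= C / (1 - q).
Proof. intros HC Hq.
  replace (sum_f_R0 (fun k => C * q ^ k) N) with (C * sum_f_R0 (fun k => q ^ k) N)
    by (rewrite scal_sum; apply sum_eq; intros; ring).
  rewrite tech3 by lra.
  assert (0 <= q ^ S N) by (apply pow_le; lra).
  assert (0 < / (1 - q)) by (apply Rinv_0_lt_compat; lra).
  unfold Rdiv. apply Rmult_le_compat_l; auto. nra. Qed.

Lemma psum_abs b z N : Cmod (psum b z N) <= sum_f_R0 (fun k => Cmod (b k) * Cmod z ^ k) N.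
Proof. unfold psum. induction N; cbn [Csum sum_f_R0].
  - rewrite Cmod_mul, Cmod_pow; lra.
  - eapply Rle_trans. apply Cmod_add. rewrite Cmod_mul, Cmod_pow. lra. Qed.

Lemma rad1_geo b r : rad1 b -> 0 <= r < 1 ->
  exists C q, 0 <= C /\ 0 <= q < 1 /\ forall k, Cmod (b k) * r ^ k <= C * q ^ k.
Proof. intros Hb Hr. set (rho := (1 + r) / 2).
  destruct (Hb rho ltac:(unfold rho; lra)) as [C HC].
  exists C, (r / rho). assert (0 < rho) by (unfold rho; lra).
  assert (0 <= C) by (specialize (HC 0%nat); pose proof (Cmod_ge0 (b 0%nat)); simpl in HC; lra).
  split; auto. split. split. apply Rmult_le_pos; [lra| apply Rlt_le, Rinv_0_lt_compat; lra].
  apply Rmult_lt_reg_r with rho; auto. unfold Rdiv. rewrite Rmult_assoc, Rinv_l; unfold rho in *; lra.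
  intro k. specialize (HC k). unfold Rdiv. rewrite Rpow_mult_distr, pow_inv.
  assert (Hr0 : 0 < rho ^ k) by (apply pow_lt; auto).
  pose proof (Cmod_ge0 (b k)).
  assert (H2 : 0 <= r ^ k * / rho ^ k). { apply Rmult_le_pos. apply pow_le; lra.
    apply Rlt_le, Rinv_0_lt_compat; auto. }
  assert (E : Cmod (b k) * r ^ k = (Cmod (b k) * rho ^ k) * (r ^ k * / rho ^ k))
    by (field; lra).
  rewrite E. apply Rmult_le_compat_r; auto. Qed.

Lemma SF_spec b z : rad1 b -> Cmod z < 1 -> Cseries_cv (fun k => Cmul (b k) (Cpow z k)) (SF b z).
Proof. intros Hb Hz. unfold SF. apply (epsilon_spec (inhabits Cz0) (fun l => Cseries_cv (fun k => Cmul (b k) (Cpow z k)) l)).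
  destruct (rad1_geo b (Cmod z) Hb ltac:(split; [apply Cmod_ge0|auto])) as [C [q [HC [Hq Hk]]]].
  destruct (series_abs_ex (fun k => fst (Cmul (b k) (Cpow z k))) C q Hq) as [l1 H1].
  { intro k. eapply Rle_trans. apply Cmod_fst. rewrite Cmod_mul, Cmod_pow. auto. }
  destruct (series_abs_ex (fun k => snd (Cmul (b k) (Cpow z k))) C q Hq) as [l2 H2].
  { intro k. eapply Rle_trans. apply Cmod_snd. rewrite Cmod_mul, Cmod_pow. auto. }
  exists (l1, l2). split; simpl.
  - apply (Un_cv_ev _ _ _ 0%nat) with (2 := H1). intros; rewrite Csum_fst; reflexivity.
  - apply (Un_cv_ev _ _ _ 0%nat) with (2 := H2). intros; rewrite Csum_snd; reflexivity. Qed.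

Lemma SF_bound b r : rad1 b -> 0 <= r < 1 -> exists B, forall z, Cmod z <= r -> Cmod (SF b z) <= B.
Proof. intros Hb Hr.
  destruct (rad1_geo b r Hb Hr) as [C [q [HC [Hq Hk]]]].
  exists (C / (1 - q)). intros z Hz.
  apply (Ccv_bound (psum b z)). 2:{ apply SF_spec; auto. lra. }
  intro N. eapply Rle_trans. apply psum_abs. eapply Rle_trans. 2: apply (geo_sum_le C q N); auto.
  apply sum_Rle. intros k _. eapply Rle_trans. 2: apply Hk.
  apply Rmult_le_compat_l. apply Cmod_ge0. apply pow_incr. split; auto. apply Cmod_ge0. Qed.
Lemma pos_sum_ge (u : nat -> R) n N : (forall k, 0 <= u k) -> (n <= N)%nat -> u n <= sum_f_R0 u N.
Proof. intros Hu HnN. induction N.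
  - assert (n = 0%nat) by lia. subst. simpl. lra.
  - destruct (Nat.eq_dec n (S N)). subst. simpl.
    assert (0 <= sum_f_R0 u N) by (apply cond_pos_sum; auto). lra.
    simpl. specialize (IHN ltac:(lia)). specialize (Hu (S N)). lra. Qed.

Lemma cv_bounded (u : nat -> R) l : Un_cv u l -> exists C, forall n, Rabs (u n) <= C.
Proof. intro H. destruct (H 1 ltac:(lra)) as [N HN].
  exists (Rabs l + 1 + sum_f_R0 (fun k => Rabs (u k)) N). intro n.
  assert (0 <= sum_f_R0 (fun k => Rabs (u k)) N) by (apply cond_pos_sum; intro; apply Rabs_pos).
  pose proof (Rabs_pos l).
  destruct (Compare_dec.le_lt_dec N n).
  - specialize (HN n ltac:(lia)). unfold Rdist in HN.
    pose proof (Rabs_triang_inv (u n) l). lra.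
  - pose proof (pos_sum_ge (fun k => Rabs (u k)) n N ltac:(intro; apply Rabs_pos) ltac:(lia)).
    simpl in *. lra. Qed.

Lemma Cmod_le_abs z : Cmod z <= Rabs (fst z) + Rabs (snd z).
Proof. unfold Cmod. rewrite <- (sqrt_pow2 (Rabs (fst z) + Rabs (snd z))).
  2:{ pose proof (Rabs_pos (fst z)); pose proof (Rabs_pos (snd z)); lra. }
  apply sqrt_le_1. nra. pose proof (Rabs_pos (fst z)); pose proof (Rabs_pos (snd z)); nra.
  rewrite <- (pow2_abs (fst z)) at 1. rewrite <- (pow2_abs (snd z)) at 1.
  pose proof (Rabs_pos (fst z)); pose proof (Rabs_pos (snd z)); nra. Qed.

Lemma rad1_of_cv a p : (forall z, inU z -> Cseries_cv (fun k => Cmul (a k) (Cpow z k)) (p z)) -> rad1 a.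
Proof. intros H rho Hr.
  assert (Hz : inU (RtoC rho)) by (unfold inU; rewrite Cmod_RtoC, Rabs_right; lra).
  destruct (H _ Hz) as [H1 H2].
  destruct (cv_bounded _ _ H1) as [C1 HC1]. destruct (cv_bounded _ _ H2) as [C2 HC2].
  exists (2 * C1 + 2 * C2). intro k.
  set (f := fun k => Cmul (a k) (Cpow (RtoC rho) k)) in *.
  assert (E : Cmod (a k) * rho ^ k = Cmod (f k)).
  { unfold f. rewrite Cmod_mul, Cmod_pow, Cmod_RtoC, Rabs_right; lra. }
  rewrite E. eapply Rle_trans. apply Cmod_le_abs.
  assert (A1 : forall n, 0 <= C1) by (intro n; specialize (HC1 n); pose proof (Rabs_pos (fst (Csum f n))); lra).
  assert (A2 : forall n, 0 <= C2) by (intro n; specialize (HC2 n); pose proof (Rabs_pos (snd (Csum f n))); lra).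
  specialize (A1 0%nat). specialize (A2 0%nat).
  destruct k.
  - specialize (HC1 0%nat). specialize (HC2 0%nat). change (Csum f 0) with (f 0%nat) in HC1, HC2. lra.
  - assert (Ef : f (S k) = Csub (Csum f (S k)) (Csum f k)) by (simpl Csum; generalize (Csum f k) (f (S k)); intros; ceq; ring).
    rewrite Ef.
    pose proof (HC1 (S k)). pose proof (HC1 k). pose proof (HC2 (S k)). pose proof (HC2 k).
    set (A := Csum f (S k)) in *. set (B := Csum f k) in *. clearbody A B.
    destruct A as [a1 a2]; destruct B as [b1 b2]. unfold Csub, Cadd, Copp; simpl fst in *; simpl snd in *.
    pose proof (Rabs_triang a1 (- b1)).
    pose proof (Rabs_triang a2 (- b2)).
    rewrite !Rabs_Ropp in *. lra. Qed.

Lemma rad1_der b : rad1 b -> rad1 (der b).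
Proof. intros Hb rho Hr. set (r1 := (1 + rho) / 2).
  destruct (Hb r1 ltac:(unfold r1; lra)) as [C HC].
  assert (Hr1 : 0 < r1) by (unfold r1; lra).
  assert (HC0 : 0 <= C) by (specialize (HC 0%nat); pose proof (Cmod_ge0 (b 0%nat)); simpl in HC; lra).
  set (x := rho / r1).
  assert (Hx : 0 <= x < 1). { unfold x. split. apply Rmult_le_pos; [lra|apply Rlt_le, Rinv_0_lt_compat; lra].
    apply Rmult_lt_reg_r with r1; auto. unfold Rdiv. rewrite Rmult_assoc, Rinv_l; unfold r1 in *; lra. }
  exists (/ (1 - x) * (C / r1)). intro k. unfold der.
  rewrite Cmod_mul, Cmod_RtoC, Rabs_right by (apply Rle_ge, pos_INR).
  rewrite S_INR.
  assert (E : (INR k + 1) * Cmod (b (S k)) * rho ^ k =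
              ((INR k + 1) * x ^ k) * ((Cmod (b (S k)) * r1 ^ (S k)) / r1)).
  { unfold x, Rdiv. rewrite Rpow_mult_distr, pow_inv. simpl. field. split; try lra. apply pow_nonzero; lra. }
  rewrite E. apply Rmult_le_compat.
  - pose proof (pos_INR k). pose proof (pow_le x k ltac:(lra)). nra.
  - pose proof (Cmod_ge0 (b (S k))). pose proof (pow_le r1 (S k) ltac:(lra)).
    apply Rmult_le_pos. nra. apply Rlt_le, Rinv_0_lt_compat; lra.
  - apply poly_geo; auto.
  - unfold Rdiv. apply Rmult_le_compat_r. apply Rlt_le, Rinv_0_lt_compat; lra. apply HC. Qed.

Lemma rad1_shift b n : rad1 b -> rad1 (fun k => b (k + n)%nat).
Proof. intros Hb rho Hr. set (r1 := (1 + rho) / 2).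
  destruct (Hb r1 ltac:(unfold r1; lra)) as [C HC].
  assert (Hr1 : 0 < r1) by (unfold r1; lra).
  exists (C / r1 ^ n). intro k.
  assert (0 < r1 ^ n) by (apply pow_lt; auto).
  eapply Rle_trans with (Cmod (b (k + n)%nat) * r1 ^ k).
  { apply Rmult_le_compat_l. apply Cmod_ge0. apply pow_incr; unfold r1; lra. }
  specialize (HC (k + n)%nat). rewrite pow_add in HC.
  apply Rmult_le_reg_r with (r1 ^ n); auto. unfold Rdiv. rewrite (Rmult_assoc C), Rinv_l by lra. nra. Qed.
Fixpoint Ed (z : Cx) (k : nat) : Cx :=
  match k with O => Cz0 | S k' => Cadd (Cpow z k') (Cmul z (Ed z k')) end.
Definition Dk z h k := Csub (Csub (Cpow (Cadd z h) k) (Cpow z k)) (Cmul (Ed z k) h).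

Lemma Ed_eq z k : Ed z (S k) = Cmul (RtoC (INR (S k))) (Cpow z k).
Proof. induction k.
  - simpl. ceq; ring.
  - change (Ed z (S (S k))) with (Cadd (Cpow z (S k)) (Cmul z (Ed z (S k)))).
    rewrite IHk. change (Cpow z (S k)) with (Cmul z (Cpow z k)).
    rewrite (S_INR (S k)). generalize (Cpow z k) (INR (S k)). intros. ceq; ring. Qed.

Lemma Dk_rec z h k : Dk z h (S k) = Cadd (Cmul (Cadd z h) (Dk z h k)) (Cmul (Ed z k) (Cmul h h)).
Proof. unfold Dk. change (Cpow (Cadd z h) (S k)) with (Cmul (Cadd z h) (Cpow (Cadd z h) k)).
  change (Cpow z (S k)) with (Cmul z (Cpow z k)).
  change (Ed z (S k)) with (Cadd (Cpow z k) (Cmul z (Ed z k))).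
  generalize (Cpow (Cadd z h) k) (Cpow z k) (Ed z k). intros. ceq; ring. Qed.

Lemma Ed_bound z k R : 0 < R -> Cmod z <= R -> Cmod (Ed z k) <= INR k * R ^ k / R.
Proof. intros HR Hz. induction k.
  - simpl. rewrite Cmod_z0. lra.
  - change (Ed z (S k)) with (Cadd (Cpow z k) (Cmul z (Ed z k))).
    eapply Rle_trans. apply Cmod_add. rewrite Cmod_mul, Cmod_pow.
    assert (Cmod z ^ k <= R ^ k) by (apply pow_incr; split; auto; apply Cmod_ge0).
    assert (Cmod z * Cmod (Ed z k) <= R * (INR k * R ^ k / R)).
    { apply Rmult_le_compat; auto; apply Cmod_ge0. }
    rewrite S_INR. simpl pow.
    replace ((INR k + 1) * (R * R ^ k) / R) with (R ^ k + R * (INR k * R ^ k / R)) by (field; lra).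
    lra. Qed.

Lemma Dk_bound z h k R : 0 < R -> Cmod z + Cmod h <= R ->
  Cmod (Dk z h k) <= INR k * (INR k - 1) / 2 * R ^ k / (R * R) * Cmod h ^ 2.
Proof. intros HR Hzh. pose proof (Cmod_ge0 z). pose proof (Cmod_ge0 h). induction k.
  - unfold Dk. simpl Cpow. simpl Ed. replace (Csub (Csub Cone Cone) (Cmul Cz0 h)) with Cz0 by (ceq; ring).
    rewrite Cmod_z0. simpl. lra.
  - rewrite Dk_rec. eapply Rle_trans. apply Cmod_add. rewrite !Cmod_mul.
    assert (Hzh' : Cmod (Cadd z h) <= R) by (pose proof (Cmod_add z h); lra).
    pose proof (Ed_bound z k R HR ltac:(lra)).
    assert (A1 : Cmod (Cadd z h) * Cmod (Dk z h k) <= R * (INR k * (INR k - 1) / 2 * R ^ k / (R * R) * Cmod h ^ 2)).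
    { apply Rmult_le_compat; auto; apply Cmod_ge0. }
    assert (A2 : Cmod (Ed z k) * (Cmod h * Cmod h) <= INR k * R ^ k / R * (Cmod h * Cmod h)).
    { apply Rmult_le_compat_r; auto. nra. }
    rewrite S_INR. simpl pow.
    replace ((INR k + 1) * (INR k + 1 - 1) / 2 * (R * R ^ k) / (R * R) * (Cmod h * (Cmod h * 1)))
      with (R * (INR k * (INR k - 1) / 2 * R ^ k / (R * R) * (Cmod h * (Cmod h * 1))) +
            INR k * R ^ k / R * (Cmod h * Cmod h)) by (field; lra).
    simpl pow in A1. lra. Qed.

Lemma sum_Ed b z N : Csum (fun k => Cmul (b k) (Ed z k)) (S N) = psum (der b) z N.
Proof. unfold psum. induction N.
  - simpl. unfold der. replace (INR 1) with 1 by (simpl; ring). generalize (b 1%nat) (b 0%nat). intros. ceq; ring.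
  - change (Csum (fun k => Cmul (b k) (Ed z k)) (S (S N))) with
      (Cadd (Csum (fun k => Cmul (b k) (Ed z k)) (S N)) (Cmul (b (S (S N))) (Ed z (S (S N))))).
    rewrite IHN. rewrite Ed_eq. simpl Csum. unfold der.
    change (Cpow z (S N)) with (Cmul z (Cpow z N)).
    generalize (Csum (fun k : nat => Cmul (Cmul (RtoC (INR (S k))) (b (S k))) (Cpow z k)) N)
      (b (S (S N))) (Cpow z N) (INR (S (S N))). intros. simpl Cpow. ceq; ring. Qed.

Lemma sum_Dk b z h N : Csum (fun k => Cmul (b k) (Dk z h k)) N =
  Csub (Csub (psum b (Cadd z h) N) (psum b z N)) (Cmul h (Csum (fun k => Cmul (b k) (Ed z k)) N)).
Proof. unfold psum, Dk. induction N.
  - simpl Csum. generalize (b 0%nat) (Cpow (Cadd z h) 0) (Cpow z 0) (Ed z 0). intros. ceq; ring.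
  - simpl Csum. rewrite IHN.
    generalize (b (S N)) (Cpow (Cadd z h) (S N)) (Cpow z (S N)) (Ed z (S N))
      (Csum (fun k : nat => Cmul (b k) (Cpow (Cadd z h) k)) N)
      (Csum (fun k : nat => Cmul (b k) (Cpow z k)) N)
      (Csum (fun k : nat => Cmul (b k) (Ed z k)) N). intros. ceq; ring. Qed.

Lemma Csum_abs f N : Cmod (Csum f N) <= sum_f_R0 (fun k => Cmod (f k)) N.
Proof. induction N; simpl. lra. eapply Rle_trans. apply Cmod_add. lra. Qed.

Lemma Ccv_S u l : Ccv u l -> Ccv (fun N => u (S N)) l.
Proof. intro H. apply (Ccv_ev (fun N => u (N + 1)%nat)) with 0%nat.
  intros; f_equal; lia. apply Ccv_shift; auto. Qed.

Lemma rad1_lin b : rad1 b -> rad1 (fun k => Cmul (RtoC (INR k + 1)) (b k)).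
Proof. intros Hb rho Hr. set (r1 := (1 + rho) / 2).
  destruct (Hb r1 ltac:(unfold r1; lra)) as [C HC].
  assert (Hr1 : 0 < r1) by (unfold r1; lra).
  assert (HC0 : 0 <= C) by (specialize (HC 0%nat); pose proof (Cmod_ge0 (b 0%nat)); simpl in HC; lra).
  set (x := rho / r1).
  assert (Hx : 0 <= x < 1). { unfold x. split. apply Rmult_le_pos; [lra|apply Rlt_le, Rinv_0_lt_compat; lra].
    apply Rmult_lt_reg_r with r1; auto. unfold Rdiv. rewrite Rmult_assoc, Rinv_l; unfold r1 in *; lra. }
  exists (/ (1 - x) * C). intro k.
  pose proof (pos_INR k).
  rewrite Cmod_mul, Cmod_RtoC, Rabs_right by lra.
  assert (E : (INR k + 1) * Cmod (b k) * rho ^ k = ((INR k + 1) * x ^ k) * (Cmod (b k) * r1 ^ k)).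
  { unfold x, Rdiv. rewrite Rpow_mult_distr, pow_inv. field. apply pow_nonzero; lra. }
  rewrite E. apply Rmult_le_compat.
  - pose proof (pow_le x k ltac:(lra)). nra.
  - pose proof (Cmod_ge0 (b k)). pose proof (pow_le r1 k ltac:(lra)). nra.
  - apply poly_geo; auto.
  - apply HC. Qed.

Lemma deriv_bound b R : rad1 b -> 0 < R < 1 -> exists C, 0 <= C /\ forall z h, Cmod z + Cmod h <= R ->
  Cmod (Csub (Csub (SF b (Cadd z h)) (SF b z)) (Cmul h (SF (der b) z))) <= C * Cmod h ^ 2.
Proof. intros Hb HR.
  destruct (rad1_geo _ R (rad1_lin _ (rad1_lin _ Hb)) ltac:(lra)) as [C [q [HC [Hq Hk]]]].
  exists (C / (1 - q) / (R * R)). split.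
  { apply Rmult_le_pos. apply Rmult_le_pos; auto. apply Rlt_le, Rinv_0_lt_compat; lra.
    apply Rlt_le, Rinv_0_lt_compat; nra. }
  intros z h Hzh. pose proof (Cmod_ge0 z). pose proof (Cmod_ge0 h).
  assert (Hz1 : Cmod z < 1) by lra.
  assert (Hzh1 : Cmod (Cadd z h) < 1) by (pose proof (Cmod_add z h); lra).
  apply (Ccv_bound (fun N => Csum (fun k => Cmul (b k) (Dk z h k)) (S N))).
  - intro N. eapply Rle_trans. apply Csum_abs.
    eapply Rle_trans with (sum_f_R0 (fun k => C * q ^ k * (Cmod h ^ 2 / (R * R))) (S N)).
    + apply sum_Rle. intros k _. rewrite Cmod_mul.
      pose proof (Dk_bound z h k R ltac:(lra) Hzh).
      specialize (Hk k). rewrite !Cmod_mul, !Cmod_RtoC, !Rabs_right in Hk by (pose proof (pos_INR k); lra).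
      pose proof (pos_INR k). pose proof (Cmod_ge0 (b k)). pose proof (pow_le R k ltac:(lra)).
      assert (0 < R * R) by nra.
      eapply Rle_trans. apply Rmult_le_compat_l. apply Cmod_ge0. exact H1.
      replace (Cmod (b k) * (INR k * (INR k - 1) / 2 * R ^ k / (R * R) * Cmod h ^ 2)) with
        ((Cmod (b k) * (INR k * (INR k - 1) / 2) * R ^ k) * (Cmod h ^ 2 / (R * R))) by (field; lra).
      apply Rmult_le_compat_r. apply Rmult_le_pos. apply pow_le; lra. apply Rlt_le, Rinv_0_lt_compat; lra.
      eapply Rle_trans. 2: exact Hk.
      apply Rmult_le_compat_r. auto. nra.
    + rewrite <- scal_sum.
      replace (C / (1 - q) / (R * R) * Cmod h ^ 2) with (Cmod h ^ 2 / (R * R) * (C / (1 - q))) by (field; split; nra).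
      apply Rmult_le_compat_l. apply Rmult_le_pos. apply pow_le; lra. apply Rlt_le, Rinv_0_lt_compat; nra.
      apply geo_sum_le; auto.
  - apply (Ccv_ev (fun N => Csub (Csub (psum b (Cadd z h) (S N)) (psum b z (S N))) (Cmul h (psum (der b) z N)))) with 0%nat.
    { intros N _. rewrite sum_Dk, sum_Ed. reflexivity. }
    apply Ccv_sub. apply Ccv_sub.
    + apply (Ccv_S (psum b (Cadd z h))). apply SF_spec; auto.
    + apply (Ccv_S (psum b z)). apply SF_spec; auto.
    + apply Ccv_mulc. apply SF_spec; auto. apply rad1_der; auto. Qed.
Definition HasD (F F1 : Cx -> Cx) (rr C : R) := forall z h, Cmod z + Cmod h <= rr ->
  Cmod (Csub (Csub (F (Cadd z h)) (F z)) (Cmul h (F1 z))) <= C * Cmod h ^ 2.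

Lemma HasD_SF b rr : rad1 b -> 0 < rr < 1 -> exists C, 0 <= C /\ HasD (SF b) (SF (der b)) rr C.
Proof. intros. destruct (deriv_bound b rr H H0) as [C [HC HH]]. exists C. split; auto. Qed.

Definition lin c t v := Cadd c (Cmul (RtoC t) v).

Lemma quot_small F F1 rr C c t v : HasD F F1 rr C -> 0 <= C -> Cmod (lin c t v) < rr ->
  forall eps, 0 < eps -> exists delta, 0 < delta /\ forall s, s <> 0 -> Rabs s < delta ->
  Cmod (Csub (Cmul (RtoC (/ s)) (Csub (F (lin c (t + s) v)) (F (lin c t v)))) (Cmul (F1 (lin c t v)) v)) < eps.
Proof. intros HF HC Hw eps He.
  set (w := lin c t v) in *.
  pose proof (Cmod_ge0 v).
  exists (Rmin ((rr - Cmod w) / (Cmod v + 1)) (eps / (C * Cmod v ^ 2 + 1))).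
  split. { apply Rmin_pos; apply Rdiv_lt_0_compat; try lra. pose proof (pow_le (Cmod v) 2 H). nra. }
  intros s Hs Hsd.
  assert (Hs1 : Rabs s < (rr - Cmod w) / (Cmod v + 1)) by (eapply Rlt_le_trans; [exact Hsd| apply Rmin_l]).
  assert (Hs2 : Rabs s < eps / (C * Cmod v ^ 2 + 1)) by (eapply Rlt_le_trans; [exact Hsd| apply Rmin_r]).
  assert (Habs : 0 < Rabs s) by (apply Rabs_pos_lt; auto).
  assert (Eq : lin c (t + s) v = Cadd w (Cmul (RtoC s) v)) by (unfold w, lin; ceq; ring).
  rewrite Eq.
  assert (Hsv : Cmod (Cmul (RtoC s) v) = Rabs s * Cmod v) by (rewrite Cmod_mul, Cmod_RtoC; auto).
  assert (Hin : Cmod w + Cmod (Cmul (RtoC s) v) <= rr).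
  { rewrite Hsv. apply Rmult_lt_compat_r with (r := Cmod v + 1) in Hs1; [|lra].
    unfold Rdiv in Hs1. rewrite Rmult_assoc, Rinv_l in Hs1 by lra. nra. }
  specialize (HF w (Cmul (RtoC s) v) Hin).
  set (E := Csub (Csub (F (Cadd w (Cmul (RtoC s) v))) (F w)) (Cmul (Cmul (RtoC s) v) (F1 w))) in *.
  assert (Eq2 : Csub (Cmul (RtoC (/ s)) (Csub (F (Cadd w (Cmul (RtoC s) v))) (F w))) (Cmul (F1 w) v)
              = Cmul (RtoC (/ s)) E).
  { unfold E. generalize (F (Cadd w (Cmul (RtoC s) v))) (F w) (F1 w). intros. ceq; field; auto. }
  rewrite Eq2, Cmod_mul, Cmod_RtoC, Rabs_inv.
  rewrite Hsv in HF.
  apply Rmult_lt_reg_l with (Rabs s); auto. rewrite <- Rmult_assoc, Rinv_r, Rmult_1_l by lra.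
  eapply Rle_lt_trans. exact HF.
  apply Rmult_lt_compat_r with (r := C * Cmod v ^ 2 + 1) in Hs2; [|pose proof (pow_le (Cmod v) 2 H); nra].
  unfold Rdiv in Hs2. rewrite Rmult_assoc, Rinv_l in Hs2 by (pose proof (pow_le (Cmod v) 2 H); nra).
  pose proof (pow_le (Cmod v) 2 H). nra. Qed.

Lemma dir_deriv_fst F F1 rr C c t v : HasD F F1 rr C -> 0 <= C -> Cmod (lin c t v) < rr ->
  derivable_pt_lim (fun s => fst (F (lin c s v))) t (fst (Cmul (F1 (lin c t v)) v)).
Proof. intros HF HC Hw eps He. destruct (quot_small F F1 rr C c t v HF HC Hw eps He) as [d [Hd H]].
  exists (mkposreal d Hd). intros s Hs Hsd. specialize (H s Hs Hsd).
  eapply Rle_lt_trans. 2: exact H. eapply Rle_trans. 2: apply Cmod_fst.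
  right. f_equal. unfold Csub, Cadd, Copp, Cmul, RtoC. simpl. unfold Rdiv. ring. Qed.

Lemma dir_deriv_snd F F1 rr C c t v : HasD F F1 rr C -> 0 <= C -> Cmod (lin c t v) < rr ->
  derivable_pt_lim (fun s => snd (F (lin c s v))) t (snd (Cmul (F1 (lin c t v)) v)).
Proof. intros HF HC Hw eps He. destruct (quot_small F F1 rr C c t v HF HC Hw eps He) as [d [Hd H]].
  exists (mkposreal d Hd). intros s Hs Hsd. specialize (H s Hs Hsd).
  eapply Rle_lt_trans. 2: exact H. eapply Rle_trans. 2: apply Cmod_snd.
  right. f_equal. unfold Csub, Cadd, Copp, Cmul, RtoC. simpl. unfold Rdiv. ring. Qed.

Definition N2 (z : Cx) := fst z ^ 2 + snd z ^ 2.

Definition dN2 (F F1 : Cx -> Cx) c v t :=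
  2 * (fst (F (lin c t v)) * fst (Cmul (F1 (lin c t v)) v) + snd (F (lin c t v)) * snd (Cmul (F1 (lin c t v)) v)).

Lemma dpl_ext (f g : R -> R) x l : (forall s, f s = g s) -> derivable_pt_lim f x l -> derivable_pt_lim g x l.
Proof. intros E H eps He. destruct (H eps He) as [d Hd]. exists d. intros. rewrite <- !E. auto. Qed.

Lemma dpl_sq2 (f g : R -> R) x l m : derivable_pt_lim f x l -> derivable_pt_lim g x m ->
  derivable_pt_lim (fun s => f s ^ 2 + g s ^ 2) x (2 * (f x * l + g x * m)).
Proof. intros Hf Hg.
  assert (H := derivable_pt_lim_plus _ _ x _ _ (derivable_pt_lim_mult _ _ x _ _ Hf Hf)
                                              (derivable_pt_lim_mult _ _ x _ _ Hg Hg)).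
  replace (2 * (f x * l + g x * m)) with (l * f x + f x * l + (m * g x + g x * m)) by ring.
  eapply dpl_ext. 2: exact H. intro s. unfold plus_fct, mult_fct. ring. Qed.

Lemma N2_deriv F F1 rr C c t v : HasD F F1 rr C -> 0 <= C -> Cmod (lin c t v) < rr ->
  derivable_pt_lim (fun s => N2 (F (lin c s v))) t (dN2 F F1 c v t).
Proof. intros HF HC Hw. unfold N2, dN2.
  apply (dpl_sq2 (fun s => fst (F (lin c s v))) (fun s => snd (F (lin c s v)))).
  apply (dir_deriv_fst F F1 rr C); auto. apply (dir_deriv_snd F F1 rr C); auto. Qed.

Lemma dpl_ext2 (f g : R -> R) x l m : (forall s, f s = g s) -> l = m -> derivable_pt_lim f x l -> derivable_pt_lim g x m.
Proof. intros E Em H. subst. eapply dpl_ext; eauto. Qed.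

Lemma dpl_lin2_fst F1 F2 rr C c t v : HasD F1 F2 rr C -> 0 <= C -> Cmod (lin c t v) < rr ->
  derivable_pt_lim (fun s => fst (Cmul (F1 (lin c s v)) v)) t (fst (Cmul (Cmul (F2 (lin c t v)) v) v)).
Proof. intros HF HC Hw.
  pose proof (dir_deriv_fst F1 F2 rr C c t v HF HC Hw) as D1.
  pose proof (dir_deriv_snd F1 F2 rr C c t v HF HC Hw) as D2.
  pose proof (derivable_pt_lim_const (fst v) t) as Cv1.
  pose proof (derivable_pt_lim_const (snd v) t) as Cv2.
  assert (H := derivable_pt_lim_minus _ _ t _ _ (derivable_pt_lim_mult _ _ t _ _ D1 Cv1)
                                                (derivable_pt_lim_mult _ _ t _ _ D2 Cv2)).
  eapply dpl_ext2. 3: exact H.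
  - intros; unfold minus_fct, mult_fct, fct_cte; simpl; ring.
  - unfold fct_cte; simpl; ring. Qed.

Lemma dpl_lin2_snd F1 F2 rr C c t v : HasD F1 F2 rr C -> 0 <= C -> Cmod (lin c t v) < rr ->
  derivable_pt_lim (fun s => snd (Cmul (F1 (lin c s v)) v)) t (snd (Cmul (Cmul (F2 (lin c t v)) v) v)).
Proof. intros HF HC Hw.
  pose proof (dir_deriv_fst F1 F2 rr C c t v HF HC Hw) as D1.
  pose proof (dir_deriv_snd F1 F2 rr C c t v HF HC Hw) as D2.
  pose proof (derivable_pt_lim_const (fst v) t) as Cv1.
  pose proof (derivable_pt_lim_const (snd v) t) as Cv2.
  assert (H := derivable_pt_lim_plus _ _ t _ _ (derivable_pt_lim_mult _ _ t _ _ D1 Cv2)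
                                                (derivable_pt_lim_mult _ _ t _ _ D2 Cv1)).
  eapply dpl_ext2. 3: exact H.
  - intros; unfold plus_fct, mult_fct, fct_cte; simpl; ring.
  - unfold fct_cte; simpl; ring. Qed.

Definition d2N2 (F F1 F2 : Cx -> Cx) c v t :=
  2 * (fst (Cmul (F1 (lin c t v)) v) * fst (Cmul (F1 (lin c t v)) v)
       + fst (F (lin c t v)) * fst (Cmul (Cmul (F2 (lin c t v)) v) v)
       + (snd (Cmul (F1 (lin c t v)) v) * snd (Cmul (F1 (lin c t v)) v)
       + snd (F (lin c t v)) * snd (Cmul (Cmul (F2 (lin c t v)) v) v))).

Lemma dN2_deriv F F1 F2 rr C1 C2 c t v : HasD F F1 rr C1 -> 0 <= C1 -> HasD F1 F2 rr C2 -> 0 <= C2 ->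
  Cmod (lin c t v) < rr -> derivable_pt_lim (dN2 F F1 c v) t (d2N2 F F1 F2 c v t).
Proof. intros H1 HC1 H2 HC2 Hw.
  pose proof (dir_deriv_fst F F1 rr C1 c t v H1 HC1 Hw) as A1.
  pose proof (dir_deriv_snd F F1 rr C1 c t v H1 HC1 Hw) as A2.
  pose proof (dpl_lin2_fst F1 F2 rr C2 c t v H2 HC2 Hw) as B1.
  pose proof (dpl_lin2_snd F1 F2 rr C2 c t v H2 HC2 Hw) as B2.
  assert (H := derivable_pt_lim_scal _ 2 t _ (derivable_pt_lim_plus _ _ t _ _
     (derivable_pt_lim_mult _ _ t _ _ A1 B1) (derivable_pt_lim_mult _ _ t _ _ A2 B2))).
  eapply dpl_ext2. 3: exact H.
  - intros; unfold dN2, mult_real_fct, plus_fct, mult_fct; ring.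
  - unfold d2N2. ring. Qed.
Lemma right_max (f : R -> R) L d : 0 < d -> derivable_pt_lim f 0 L ->
  (forall t, 0 < t < d -> f t <= f 0) -> L <= 0.
Proof. intros Hd H Hm. destruct (Rle_lt_dec L 0) as [|HL]; auto. exfalso.
  destruct (H (L / 2) ltac:(lra)) as [e He].
  assert (0 < Rmin d e) by (apply Rmin_pos; auto; apply cond_pos).
  set (s := Rmin d e / 2).
  assert (Hs1 : s < d) by (unfold s; pose proof (Rmin_l d e); lra).
  assert (Hs2 : s < e) by (unfold s; pose proof (Rmin_r d e); lra).
  assert (Hs : 0 < s) by (unfold s; lra).
  specialize (He s ltac:(lra) ltac:(rewrite Rabs_right; lra)).
  specialize (Hm s ltac:(lra)). rewrite Rplus_0_l in He.
  assert ((f s - f 0) / s <= 0). { unfold Rdiv. assert (0 < / s) by (apply Rinv_0_lt_compat; lra). nra. }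
  apply Rabs_def2 in He. lra. Qed.

Lemma left_max (f : R -> R) L d : 0 < d -> derivable_pt_lim f 0 L ->
  (forall t, -d < t < 0 -> f t <= f 0) -> 0 <= L.
Proof. intros Hd H Hm. destruct (Rle_lt_dec 0 L) as [|HL]; auto. exfalso.
  destruct (H (- L / 2) ltac:(lra)) as [e He].
  assert (0 < Rmin d e) by (apply Rmin_pos; auto; apply cond_pos).
  set (s := - (Rmin d e / 2)).
  assert (Hs1 : - d < s) by (unfold s; pose proof (Rmin_l d e); lra).
  assert (Hs2 : - e < s) by (unfold s; pose proof (Rmin_r d e); lra).
  assert (Hs : s < 0) by (unfold s; lra).
  specialize (He s ltac:(lra) ltac:(rewrite Rabs_left; lra)).
  specialize (Hm s ltac:(lra)). rewrite Rplus_0_l in He.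
  assert (0 <= (f s - f 0) / s).
  { unfold Rdiv.
    replace ((f s - f 0) * / s) with ((f 0 - f s) * / (- s)) by (field; lra).
    apply Rmult_le_pos; [lra| apply Rlt_le, Rinv_0_lt_compat; lra]. }
  apply Rabs_def2 in He. lra. Qed.

Lemma no_max2 (f d : R -> R) D dl : 0 < dl ->
  (forall t, -dl < t < dl -> derivable_pt_lim f t (d t)) -> derivable_pt_lim d 0 D -> 0 < D ->
  (forall t, -dl < t < dl -> f t <= f 0) -> False.
Proof. intros Hdl Hf Hd HD Hm.
  assert (d0 : d 0 = 0).
  { assert (d 0 <= 0) by (apply (right_max f _ dl); auto; [apply Hf; lra| intros; apply Hm; lra]).
    assert (0 <= d 0) by (apply (left_max f _ dl); auto; [apply Hf; lra| intros; apply Hm; lra]).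
    lra. }
  destruct (Hd (D / 2) ltac:(lra)) as [e He].
  assert (Hpos : forall s, 0 < s < e -> 0 < d s).
  { intros s Hs. specialize (He s ltac:(lra) ltac:(rewrite Rabs_right; lra)).
    rewrite Rplus_0_l, d0 in He. apply Rabs_def2 in He.
    destruct He as [He1 He2].
    assert (D / 2 < d s / s) by (unfold Rminus in He2; rewrite Rminus_0_r in He2 || idtac; lra).
    destruct (Rle_lt_dec (d s) 0); auto.
    assert (d s / s <= 0). { unfold Rdiv. assert (0 < / s) by (apply Rinv_0_lt_compat; lra). nra. }
    lra. }
  assert (0 < Rmin dl e) by (apply Rmin_pos; auto; apply cond_pos).
  set (s := Rmin dl e / 2).
  assert (Hs1 : s < dl) by (unfold s; pose proof (Rmin_l dl e); lra).
  assert (Hs2 : s < e) by (unfold s; pose proof (Rmin_r dl e); lra).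
  assert (Hs : 0 < s) by (unfold s; lra).
  destruct (MVT_cor2 f d 0 s Hs) as [x [Ex Hx]].
  { intros x Hx. apply Hf. lra. }
  specialize (Hpos x ltac:(lra)). specialize (Hm s ltac:(lra)). nra. Qed.
Lemma lip_cont (f : R -> R) y0 L : 0 <= L -> (forall y, Rabs (f y - f y0) <= L * Rabs (y - y0)) -> continuity_pt f y0.
Proof. intros HL H. unfold continuity_pt, continue_in, limit1_in, limit_in. intros eps He.
  exists (eps / (L + 1)). split. apply Rdiv_lt_0_compat; lra.
  intros x [_ Hx]. simpl in *. unfold Rdist in *. eapply Rle_lt_trans. apply H.
  apply Rle_lt_trans with ((L + 1) * Rabs (x - y0)). pose proof (Rabs_pos (x - y0)); nra.
  apply Rmult_lt_compat_l with (r := L + 1) in Hx; [|lra].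
  replace ((L + 1) * (eps / (L + 1))) with eps in Hx by (field; lra). auto. Qed.

Lemma sqrt_diff a b : 0 <= a -> 0 <= b -> Rabs (sqrt a - sqrt b) <= sqrt (Rabs (a - b)).
Proof. intros Ha Hb.
  assert (K : forall a b, 0 <= b <= a -> sqrt a - sqrt b <= sqrt (a - b)).
  { intros x y [Hy Hxy]. pose proof (sqrt_pos y). pose proof (sqrt_pos (x - y)).
    assert (sqrt x <= sqrt y + sqrt (x - y)).
    { rewrite <- (sqrt_pow2 (sqrt y + sqrt (x - y))) by lra. apply sqrt_le_1. lra. nra.
      replace ((sqrt y + sqrt (x - y)) ^ 2) with (sqrt y * sqrt y + sqrt (x - y) * sqrt (x - y) + 2 * sqrt y * sqrt (x - y)) by ring.
      rewrite !sqrt_sqrt by lra. nra. }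
    lra. }
  destruct (Rle_lt_dec b a).
  - pose proof (sqrt_le_1 b a Hb Ha r). rewrite Rabs_right by lra. rewrite (Rabs_right (a - b)) by lra. apply K; lra.
  - pose proof (sqrt_le_1 a b Ha Hb ltac:(lra)). rewrite Rabs_left1 by lra. rewrite (Rabs_left1 (a - b)) by lra.
    replace (- (sqrt a - sqrt b)) with (sqrt b - sqrt a) by ring. replace (- (a - b)) with (b - a) by ring.
    apply K; lra. Qed.

Section Disk.
Variable rr : R.
Definition cl x := Rmax (- rr) (Rmin rr x).
Definition sq x := sqrt (1 - cl x ^ 2 / rr ^ 2).
Definition psi x y : Cx := (cl x, cl y * sq x).

Hypothesis Hrr : 0 < rr.

Lemma cl_bound x : - rr <= cl x <= rr.
Proof. unfold cl. split. apply Rmax_l. apply Rmax_lub. lra. apply Rmin_l. Qed.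
Lemma cl_id x : - rr <= x <= rr -> cl x = x.
Proof. intros. unfold cl. rewrite Rmin_right by lra. rewrite Rmax_right; lra. Qed.
Lemma cl_lip x y : Rabs (cl x - cl y) <= Rabs (x - y).
Proof. unfold cl. unfold Rmax, Rmin. repeat destruct Rle_dec; unfold Rabs; repeat destruct Rcase_abs; lra. Qed.
Lemma sq_arg x : 0 <= 1 - cl x ^ 2 / rr ^ 2 <= 1.
Proof. pose proof (cl_bound x). assert (0 < rr ^ 2) by nra.
  assert (cl x ^ 2 <= rr ^ 2) by nra. split.
  - apply Rmult_le_reg_r with (rr ^ 2); auto. unfold Rdiv. rewrite Rmult_minus_distr_r, Rmult_assoc, Rinv_l; nra.
  - assert (0 <= cl x ^ 2 / rr ^ 2) by (apply Rmult_le_pos; [nra| apply Rlt_le, Rinv_0_lt_compat; auto]). lra. Qed.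
Lemma sq_bound x : 0 <= sq x <= 1.
Proof. unfold sq. pose proof (sq_arg x). split. apply sqrt_pos.
  apply Rle_trans with (sqrt 1). apply sqrt_le_1; lra. rewrite sqrt_1; lra. Qed.
Lemma sq_sq x : sq x ^ 2 = 1 - cl x ^ 2 / rr ^ 2.
Proof. unfold sq. rewrite pow2_sqrt; auto. apply sq_arg. Qed.

Lemma psi_in x y : Cmod (psi x y) <= rr.
Proof. unfold Cmod, psi; simpl fst; simpl snd. rewrite <- (sqrt_pow2 rr) by lra. apply sqrt_le_1. nra. nra.
  rewrite Rpow_mult_distr, sq_sq. pose proof (cl_bound x). pose proof (cl_bound y).
  assert (0 < rr ^ 2) by nra.
  assert (cl y ^ 2 <= rr ^ 2) by nra.
  replace (cl x ^ 2 + cl y ^ 2 * (1 - cl x ^ 2 / rr ^ 2)) with (cl x ^ 2 * (1 - cl y ^ 2 / rr ^ 2) + cl y ^ 2) by (field; lra).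
  assert (0 <= 1 - cl y ^ 2 / rr ^ 2) by (apply (proj1 (sq_arg y))).
  assert (cl x ^ 2 <= rr ^ 2) by nra.
  replace (rr ^ 2) with (rr ^ 2 * (1 - cl y ^ 2 / rr ^ 2) + cl y ^ 2) at 2 by (field; lra). nra. Qed.

Lemma psi_onto z : Cmod z <= rr -> exists x y, psi x y = z.
Proof. intro Hz. destruct z as [a b].
  assert (Hab : a ^ 2 + b ^ 2 <= rr ^ 2).
  { pose proof (Cmod_sq (a, b)) as E. simpl fst in E; simpl snd in E. rewrite <- E.
    pose proof (Cmod_ge0 (a,b)). nra. }
  assert (Ha : - rr <= a <= rr) by (split; nra).
  exists a. assert (0 < rr ^ 2) by nra.
  destruct (Req_dec (sq a) 0) as [E|E].
  - exists 0. unfold psi. rewrite cl_id by auto. rewrite E.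
    assert (a ^ 2 = rr ^ 2).
    { pose proof (sq_sq a). rewrite E, cl_id in H0 by auto.
      apply Rmult_eq_reg_r with (/ rr ^ 2). 2: apply Rinv_neq_0_compat; lra.
      rewrite Rinv_r by lra. simpl in H0 |- *. lra. }
    assert (b = 0) by nra. subst. f_equal; ring.
  - pose proof (sq_bound a). exists (b / sq a). unfold psi. rewrite (cl_id a) by auto.
    assert (Hs : 0 < sq a) by lra.
    assert (S2 : sq a ^ 2 = 1 - a ^ 2 / rr ^ 2) by (rewrite sq_sq, cl_id; auto).
    rewrite cl_id. f_equal. field. lra.
    assert (b ^ 2 <= rr ^ 2 * sq a ^ 2).
    { rewrite S2. replace (rr ^ 2 * (1 - a ^ 2 / rr ^ 2)) with (rr ^ 2 - a ^ 2) by (field; lra). lra. }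
    set (y := b / sq a).
    assert (Hy : b = y * sq a) by (unfold y; field; lra).
    rewrite Hy in H1.
    assert (y ^ 2 <= rr ^ 2).
    { assert (0 < sq a ^ 2) by nra.
      apply Rmult_le_reg_r with (sq a ^ 2); auto. rewrite Rpow_mult_distr in H1. lra. }
    split; nra. Qed.
End Disk.
Lemma psi_lip_y rr x y y' : 0 < rr -> Cmod (Csub (psi rr x y) (psi rr x y')) <= Rabs (y - y').
Proof. intro Hr. eapply Rle_trans. apply Cmod_le_abs. unfold psi, Csub, Cadd, Copp; simpl fst; simpl snd.
  replace (cl rr x + - cl rr x) with 0 by ring. rewrite Rabs_R0.
  replace (cl rr y * sq rr x + - (cl rr y' * sq rr x)) with ((cl rr y - cl rr y') * sq rr x) by ring.
  rewrite Rabs_mult. pose proof (sq_bound rr Hr x). rewrite (Rabs_right (sq rr x)) by lra.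
  pose proof (cl_lip rr Hr y y'). pose proof (Rabs_pos (cl rr y - cl rr y')). nra. Qed.

Lemma psi_lip_x rr x x' y : 0 < rr ->
  Cmod (Csub (psi rr x y) (psi rr x' y)) <= Rabs (x - x') + rr * sqrt (2 * Rabs (x - x') / rr).
Proof. intro Hr. eapply Rle_trans. apply Cmod_le_abs. unfold psi, Csub, Cadd, Copp; simpl fst; simpl snd.
  pose proof (cl_lip rr Hr x x').
  replace (cl rr y * sq rr x + - (cl rr y * sq rr x')) with (cl rr y * (sq rr x - sq rr x')) by ring.
  rewrite Rabs_mult.
  assert (Rabs (cl rr y) <= rr) by (pose proof (cl_bound rr Hr y); unfold Rabs; destruct Rcase_abs; lra).
  assert (Rabs (sq rr x - sq rr x') <= sqrt (2 * Rabs (x - x') / rr)).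
  { unfold sq. eapply Rle_trans. apply sqrt_diff; apply (sq_arg rr Hr).
    apply sqrt_le_1. apply Rabs_pos. apply Rmult_le_pos. pose proof (Rabs_pos (x - x')); lra.
    apply Rlt_le, Rinv_0_lt_compat; lra.
    replace (1 - cl rr x ^ 2 / rr ^ 2 - (1 - cl rr x' ^ 2 / rr ^ 2)) with
      ((cl rr x' - cl rr x) * (cl rr x' + cl rr x) / (rr * rr)) by (field; lra).
    unfold Rdiv. rewrite !Rabs_mult. rewrite (Rabs_right (/ (rr * rr))) by (apply Rle_ge, Rlt_le, Rinv_0_lt_compat; nra).
    rewrite Rabs_minus_sym.
    assert (Rabs (cl rr x' + cl rr x) <= 2 * rr).
    { pose proof (cl_bound rr Hr x); pose proof (cl_bound rr Hr x'). unfold Rabs; destruct Rcase_abs; lra. }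
    replace (2 * Rabs (x - x') * / rr) with (Rabs (x - x') * (2 * rr) * / (rr * rr)) by (field; lra).
    apply Rmult_le_compat_r. apply Rlt_le, Rinv_0_lt_compat; nra.
    apply Rmult_le_compat; auto; apply Rabs_pos. }
  pose proof (Rabs_pos (cl rr y)). pose proof (Rabs_pos (sq rr x - sq rr x')).
  assert (Rabs (cl rr y) * Rabs (sq rr x - sq rr x') <= rr * sqrt (2 * Rabs (x - x') / rr)).
  { apply Rmult_le_compat; auto. }
  replace (cl rr x + - cl rr x') with (cl rr x - cl rr x') by ring. lra. Qed.

Lemma omega_small rr L eps : 0 < rr -> 0 <= L -> 0 < eps -> exists d, 0 < d /\
  forall t, 0 <= t < d -> L * (t + rr * sqrt (2 * t / rr)) < eps.
Proof. intros Hr HL He.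
  set (e1 := eps / (2 * (L + 1))).
  assert (He1 : 0 < e1) by (unfold e1; apply Rdiv_lt_0_compat; lra).
  exists (Rmin e1 (rr / 2 * (e1 / rr) ^ 2)). split.
  { apply Rmin_pos; auto. apply Rmult_lt_0_compat. lra. apply pow_lt. apply Rdiv_lt_0_compat; lra. }
  intros t [Ht0 Ht].
  assert (Ht1 : t < e1) by (eapply Rlt_le_trans; [exact Ht| apply Rmin_l]).
  assert (Ht2 : t < rr / 2 * (e1 / rr) ^ 2) by (eapply Rlt_le_trans; [exact Ht| apply Rmin_r]).
  assert (S : sqrt (2 * t / rr) < e1 / rr).
  { rewrite <- (sqrt_pow2 (e1 / rr)) by (apply Rlt_le, Rdiv_lt_0_compat; lra).
    apply sqrt_lt_1. apply Rmult_le_pos. lra. apply Rlt_le, Rinv_0_lt_compat; lra.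
    apply pow_le, Rlt_le, Rdiv_lt_0_compat; lra.
    apply Rmult_lt_reg_r with (rr / 2). lra.
    replace (2 * t / rr * (rr / 2)) with t by (field; lra). lra. }
  assert (rr * sqrt (2 * t / rr) < e1).
  { apply Rmult_lt_compat_l with (r := rr) in S; auto.
    replace (rr * (e1 / rr)) with e1 in S by (field; lra). auto. }
  assert (L * e1 <= eps / 2).
  { unfold e1. replace (L * (eps / (2 * (L + 1)))) with (eps / 2 * (L / (L + 1))) by (field; lra).
    assert (L / (L + 1) <= 1). { apply Rmult_le_reg_r with (L + 1). lra. unfold Rdiv. rewrite Rmult_assoc, Rinv_l; lra. }
    nra. }
  pose proof (sqrt_pos (2 * t / rr)).
  assert (L * (t + rr * sqrt (2 * t / rr)) <= L * (2 * e1)) by (apply Rmult_le_compat_l; lra).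
  nra. Qed.

Lemma disk_max (u : Cx -> R) rr L : 0 < rr -> 0 <= L ->
  (forall z w, Cmod z <= rr -> Cmod w <= rr -> Rabs (u z - u w) <= L * Cmod (Csub z w)) ->
  exists c, Cmod c <= rr /\ forall z, Cmod z <= rr -> u z <= u c.
Proof. intros Hr HL Hu.
  set (U := fun x y => u (psi rr x y)).
  assert (HUy : forall x y y', Rabs (U x y - U x y') <= L * Rabs (y - y')).
  { intros. unfold U. eapply Rle_trans. apply Hu; apply (psi_in rr Hr).
    apply Rmult_le_compat_l; auto. apply psi_lip_y; auto. }
  assert (HUx : forall x x' y, Rabs (U x y - U x' y) <= L * (Rabs (x - x') + rr * sqrt (2 * Rabs (x - x') / rr))).
  { intros. unfold U. eapply Rle_trans. apply Hu; apply (psi_in rr Hr).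
    apply Rmult_le_compat_l; auto. apply psi_lip_x; auto. }
  assert (Ey : forall x, exists y, (forall y', - rr <= y' <= rr -> U x y' <= U x y) /\ - rr <= y <= rr).
  { intro x. apply continuity_ab_maj. lra. intros y0 _. apply (lip_cont _ y0 L HL).
    intro y. apply HUy. }
  set (ym := fun x => epsilon (inhabits 0) (fun y => (forall y', - rr <= y' <= rr -> U x y' <= U x y) /\ - rr <= y <= rr)).
  assert (Hym : forall x, (forall y', - rr <= y' <= rr -> U x y' <= U x (ym x)) /\ - rr <= ym x <= rr).
  { intro x. unfold ym. apply (epsilon_spec (inhabits 0) (fun y => (forall y', - rr <= y' <= rr -> U x y' <= U x y) /\ - rr <= y <= rr)). apply Ey. }
  set (g := fun x => U x (ym x)).
  assert (Hg : forall x x', Rabs (g x - g x') <= L * (Rabs (x - x') + rr * sqrt (2 * Rabs (x - x') / rr))).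
  { intros x x'. unfold g.
    destruct (Hym x) as [A1 A2]. destruct (Hym x') as [B1 B2].
    specialize (A1 (ym x') B2). specialize (B1 (ym x) A2).
    pose proof (HUx x x' (ym x)). pose proof (HUx x x' (ym x')).
    unfold Rabs in *. repeat destruct Rcase_abs; lra. }
  destruct (continuity_ab_maj g (- rr) rr ltac:(lra)) as [xs [Hxs Hxs']].
  { intros x0 _. unfold continuity_pt, continue_in, limit1_in, limit_in. intros eps He.
    destruct (omega_small rr L eps Hr HL He) as [d [Hd Hd']].
    exists d. split; auto. intros x [_ Hx]. simpl in *. unfold Rdist in *.
    eapply Rle_lt_trans. apply Hg. apply Hd'. split; auto. apply Rabs_pos. }
  exists (psi rr xs (ym xs)). split. apply (psi_in rr Hr).
  intros z Hz. destruct (psi_onto rr Hr z Hz) as [x [y Exy]]. subst z.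
  change (u (psi rr x y)) with (U x y). change (u (psi rr xs (ym xs))) with (g xs).
  destruct (Hym x) as [A1 A2].
  assert (Hx : cl rr x = x -> - rr <= x <= rr) by (intro E; rewrite <- E; apply (cl_bound rr Hr)).
  assert (Epsi : psi rr x y = psi rr (cl rr x) (cl rr y)).
  { unfold psi, sq. assert (forall t, cl rr (cl rr t) = cl rr t) by (intro t; apply cl_id; apply (cl_bound rr Hr)).
    rewrite !H. reflexivity. }
  change (U x y) with (u (psi rr x y)). rewrite Epsi. change (u (psi rr (cl rr x) (cl rr y))) with (U (cl rr x) (cl rr y)).
  destruct (Hym (cl rr x)) as [C1 C2].
  eapply Rle_trans. apply C1. apply (cl_bound rr Hr).
  apply Hxs. apply (cl_bound rr Hr). Qed.
Lemma Cpow_add z k m : Cpow z (k + m) = Cmul (Cpow z k) (Cpow z m).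
Proof. induction k. simpl. ceq; ring. simpl. rewrite IHk. generalize (Cpow z k) (Cpow z m). intros. ceq; ring. Qed.

Lemma Cpow_z0 m : Cpow Cz0 (S m) = Cz0.
Proof. simpl. ceq; ring. Qed.

Lemma Cmod_lt_pow x n : 0 <= x < 1 -> (1 <= n)%nat -> x ^ n < 1.
Proof. intros Hx Hn. destruct n. lia. simpl. assert (x ^ n <= 1) by (apply pow_le_1 || (rewrite <- (pow1 n); apply pow_incr; lra)).
  pose proof (pow_le x n ltac:(lra)). nra. Qed.

Section Series.
Variable a : nat -> Cx.
Variable m : nat.
Hypothesis Ha0 : a 0%nat = Cone.
Hypothesis Haz : forall k, (1 <= k < S m)%nat -> a k = Cz0.
Definition bsh := fun k => a (k + S m)%nat.
Definition ka := fun k => Cmul (RtoC (INR k)) (a k).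

Lemma L1 z k : (k <= m)%nat -> psum a z k = Cone.
Proof. unfold psum. induction k; intro Hk.
  - simpl. rewrite Ha0. ceq; ring.
  - simpl. rewrite IHk by lia. rewrite Haz by lia. generalize (Cpow z (S k)). intros. ceq; ring. Qed.

Lemma L2 z N : psum a z (N + S m) = Cadd Cone (Cmul (Cpow z (S m)) (psum bsh z N)).
Proof. unfold psum, bsh. induction N.
  - simpl plus. change (Csum (fun k => Cmul (a k) (Cpow z k)) (S m)) with
      (Cadd (psum a z m) (Cmul (a (S m)) (Cpow z (S m)))). rewrite L1 by lia.
    simpl Csum. simpl (0 + S m)%nat. change (Cpow z 0) with Cone.
    generalize (a (S m)) (Cpow z (S m)). intros. ceq; ring.
  - change (Csum (fun k => Cmul (a k) (Cpow z k)) (S N + S m)) with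
      (Cadd (Csum (fun k => Cmul (a k) (Cpow z k)) (N + S m)) (Cmul (a (S (N + S m))) (Cpow z (S (N + S m))))).
    change (Csum (fun k => Cmul (a (k + S m)%nat) (Cpow z k)) (S N)) with
      (Cadd (Csum (fun k => Cmul (a (k + S m)%nat) (Cpow z k)) N) (Cmul (a (S (N + S m))) (Cpow z (S N)))).
    rewrite IHN.
    replace (Cpow z (S (N + S m))) with (Cmul (Cpow z (S m)) (Cpow z (S N))).
    2:{ rewrite <- Cpow_add. f_equal. lia. }
    generalize (Cpow z (S m)) (Cpow z (S N)) (a (S (N + S m)))
      (Csum (fun k : nat => Cmul (a (k + S m)%nat) (Cpow z k)) N). intros. ceq; ring. Qed.

Lemma L3 z k : (k <= m)%nat -> psum ka z k = Cz0.
Proof. unfold psum, ka. induction k; intro Hk.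
  - simpl. ceq; ring.
  - simpl Csum. rewrite IHk by lia. rewrite Haz by lia. generalize (Cpow z (S k)). intros. ceq; ring. Qed.

Lemma L5 z N : Cmul z (psum (der a) z N) = psum ka z (S N).
Proof. unfold psum, ka, der. induction N.
  - simpl. ceq; ring.
  - change (Csum (fun k => Cmul (Cmul (RtoC (INR k)) (a k)) (Cpow z k)) (S (S N))) with
     (Cadd (Csum (fun k => Cmul (Cmul (RtoC (INR k)) (a k)) (Cpow z k)) (S N))
           (Cmul (Cmul (RtoC (INR (S (S N)))) (a (S (S N)))) (Cpow z (S (S N))))).
    rewrite <- IHN. cbn [Csum]. change (Cpow z (S (S N))) with (Cmul z (Cpow z (S N))).
    generalize (Csum (fun k : nat => Cmul (Cmul (RtoC (INR (S k))) (a (S k))) (Cpow z k)) N)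
      (Cpow z (S N)) (a (S (S N))) (INR (S (S N))). intros. ceq; ring. Qed.

Lemma L4 z N : psum ka z (S N + S m) =
  Cmul (Cpow z (S m)) (Cadd (Cmul (RtoC (INR (S m))) (psum bsh z (S N))) (Cmul z (psum (der bsh) z N))).
Proof. unfold psum, bsh, ka, der. induction N.
  - change (S 0 + S m)%nat with (S (S m)).
    change (Csum (fun k => Cmul (Cmul (RtoC (INR k)) (a k)) (Cpow z k)) (S (S m))) with
      (Cadd (Cadd (psum ka z m) (Cmul (Cmul (RtoC (INR (S m))) (a (S m))) (Cpow z (S m))))
            (Cmul (Cmul (RtoC (INR (S (S m)))) (a (S (S m)))) (Cpow z (S (S m))))).
    rewrite L3 by lia. simpl Csum. simpl plus.
    change (Cpow z (S (S m))) with (Cmul z (Cpow z (S m))). change (Cpow z 1) with (Cmul z Cone).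
    change (Cpow z 0) with Cone. rewrite (S_INR (S m)).
    generalize (Cpow z (S m)) (a (S m)) (a (S (S m))) (INR (S m)). intros. ceq; ring.
  - change (S (S N) + S m)%nat with (S (S N + S m)).
    change (Csum (fun k => Cmul (Cmul (RtoC (INR k)) (a k)) (Cpow z k)) (S (S N + S m))) with
      (Cadd (Csum (fun k => Cmul (Cmul (RtoC (INR k)) (a k)) (Cpow z k)) (S N + S m))
        (Cmul (Cmul (RtoC (INR (S (S N + S m)))) (a (S (S N + S m)))) (Cpow z (S (S N + S m))))).
    rewrite IHN. clear IHN.
    change (Csum (fun k => Cmul (a (k + S m)%nat) (Cpow z k)) (S (S N))) with
      (Cadd (Csum (fun k => Cmul (a (k + S m)%nat) (Cpow z k)) (S N)) (Cmul (a (S (S N) + S m)%nat) (Cpow z (S (S N))))).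
    change (Csum (fun k => Cmul (Cmul (RtoC (INR (S k))) (a (S k + S m)%nat)) (Cpow z k)) (S N)) with
      (Cadd (Csum (fun k => Cmul (Cmul (RtoC (INR (S k))) (a (S k + S m)%nat)) (Cpow z k)) N)
         (Cmul (Cmul (RtoC (INR (S (S N)))) (a (S (S N) + S m)%nat)) (Cpow z (S N)))).
    replace (Cpow z (S (S N + S m))) with (Cmul (Cpow z (S m)) (Cpow z (S (S N)))).
    2:{ rewrite <- Cpow_add. f_equal. lia. }
    change (Cpow z (S (S N))) with (Cmul z (Cpow z (S N))).
    replace (INR (S (S N + S m))) with (INR (S m) + INR (S (S N))) by (rewrite <- plus_INR; f_equal; lia).
    change (S (S N + S m)) with (S (S N) + S m)%nat.
    generalize (Cpow z (S m)) (Cpow z (S N)) (a (S (S N) + S m)%nat) (INR (S m)) (INR (S (S N)))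
      (Csum (fun k => Cmul (a (k + S m)%nat) (Cpow z k)) (S N))
      (Csum (fun k => Cmul (Cmul (RtoC (INR (S k))) (a (S k + S m)%nat)) (Cpow z k)) N). intros. ceq; ring. Qed.
End Series.
Definition Idf (z : Cx) := z.
Definition Onef (z : Cx) := Cone.
Definition Zerof (z : Cx) := Cz0.

Lemma HasD_Id rr : HasD Idf Onef rr 0.
Proof. intros z h _. unfold Idf, Onef.
  replace (Csub (Csub (Cadd z h) z) (Cmul h Cone)) with Cz0 by (ceq; ring). rewrite Cmod_z0. lra. Qed.
Lemma HasD_One rr : HasD Onef Zerof rr 0.
Proof. intros z h _. unfold Zerof, Onef.
  replace (Csub (Csub Cone Cone) (Cmul h Cz0)) with Cz0 by (ceq; ring). rewrite Cmod_z0. lra. Qed.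

Lemma lin0 c v : lin c 0 v = c.
Proof. unfold lin. ceq; ring. Qed.

Lemma Cmod_lin c t v : Cmod (lin c t v) <= Cmod c + Rabs t * Cmod v.
Proof. unfold lin. eapply Rle_trans. apply Cmod_add. rewrite Cmod_mul, Cmod_RtoC. lra. Qed.

Lemma N2_Cmod X : N2 X = Cmod X ^ 2.
Proof. unfold N2. rewrite Cmod_sq. auto. Qed.

Lemma N2_lip X Y B : Cmod X <= B -> Cmod Y <= B -> Rabs (N2 X - N2 Y) <= 2 * B * Cmod (Csub X Y).
Proof. intros HX HY. rewrite !N2_Cmod. pose proof (Cmod_rev X Y). pose proof (Cmod_rev Y X).
  rewrite Cmod_sub_sym in H0. pose proof (Cmod_ge0 X). pose proof (Cmod_ge0 Y).
  replace (Cmod X ^ 2 - Cmod Y ^ 2) with ((Cmod X - Cmod Y) * (Cmod X + Cmod Y)) by ring.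
  rewrite Rabs_mult. rewrite (Rabs_right (Cmod X + Cmod Y)) by lra.
  assert (Rabs (Cmod X - Cmod Y) <= Cmod (Csub X Y)) by (unfold Rabs; destruct Rcase_abs; lra).
  pose proof (Rabs_pos (Cmod X - Cmod Y)). nra. Qed.

Lemma Q_lip Q Q1 rr C1 r B0 B1 : HasD Q Q1 rr C1 -> 0 <= C1 -> 0 < r < rr ->
  (forall z, Cmod z <= r -> Cmod (Q z) <= B0 /\ Cmod (Q1 z) <= B1) ->
  exists L, 0 <= L /\ forall z w, Cmod z <= r -> Cmod w <= r -> Cmod (Csub (Q w) (Q z)) <= L * Cmod (Csub w z).
Proof. intros HQ HC Hr HB.
  assert (B0p : 0 <= B0) by (destruct (HB Cz0) as [H _]; [rewrite Cmod_z0; lra| pose proof (Cmod_ge0 (Q Cz0)); lra]).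
  assert (B1p : 0 <= B1) by (destruct (HB Cz0) as [_ H]; [rewrite Cmod_z0; lra| pose proof (Cmod_ge0 (Q1 Cz0)); lra]).
  set (d := rr - r). assert (Hd : 0 < d) by (unfold d; lra).
  exists (B1 + C1 * d + 2 * B0 / d). split. { assert (0 <= 2 * B0 / d) by (apply Rmult_le_pos; [lra| apply Rlt_le, Rinv_0_lt_compat; lra]). nra. }
  intros z w Hz Hw. set (h := Csub w z). pose proof (Cmod_ge0 h).
  assert (0 <= 2 * B0 / d) by (apply Rmult_le_pos; [lra| apply Rlt_le, Rinv_0_lt_compat; lra]).
  destruct (Rle_lt_dec (Cmod h) d).
  - assert (Hin : Cmod z + Cmod h <= rr) by (unfold d in *; lra).
    specialize (HQ z h Hin). replace (Cadd z h) with w in HQ by (unfold h; ceq; ring).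
    destruct (HB z Hz) as [_ HB1].
    replace (Csub (Q w) (Q z)) with (Cadd (Csub (Csub (Q w) (Q z)) (Cmul h (Q1 z))) (Cmul h (Q1 z))) by (ceq; ring).
    eapply Rle_trans. apply Cmod_add. rewrite Cmod_mul.
    assert (C1 * Cmod h ^ 2 <= C1 * d * Cmod h).
    { assert (Cmod h * Cmod h <= d * Cmod h) by nra. simpl. nra. }
    assert (Cmod h * Cmod (Q1 z) <= B1 * Cmod h) by nra.
    assert (0 <= 2 * B0 / d * Cmod h) by nra. nra.
  - destruct (HB z Hz) as [H0z _]. destruct (HB w Hw) as [H0w _].
    eapply Rle_trans. apply Cmod_sub_tri.
    assert (2 * B0 <= 2 * B0 / d * Cmod h).
    { unfold Rdiv. replace (2 * B0 * / d * Cmod h) with (2 * B0 * (Cmod h / d)) by (field; lra).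
      assert (1 <= Cmod h / d). { apply Rmult_le_reg_r with d; auto. unfold Rdiv. rewrite Rmult_assoc, Rinv_l; lra. }
      nra. }
    assert (0 <= (B1 + C1 * d) * Cmod h) by (apply Rmult_le_pos; nra). nra. Qed.

Lemma deriv_unique (p F F1 : Cx -> Cx) z l rr C : Cderiv_at p z l -> HasD F F1 rr C -> 0 <= C ->
  Cmod z < rr -> (forall w, Cmod w < rr -> p w = F w) -> l = F1 z.
Proof. intros Hd HF HC Hz Hpf.
  assert (E : Cmod (Csub l (F1 z)) = 0).
  { apply Rle_antisym; [|apply Cmod_ge0]. apply Rnot_lt_le. intro Hpos.
    set (e := Cmod (Csub l (F1 z))) in *.
    destruct (Hd (e / 2) ltac:(lra)) as [dl [Hdl Hh]].
    set (t := Rmin (Rmin (dl / 2) ((rr - Cmod z) / 2)) (e / (4 * (C + 1)))).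
    assert (Ht : 0 < t). { unfold t. repeat apply Rmin_pos; try lra. apply Rdiv_lt_0_compat; lra. }
    assert (Ht1 : t <= dl / 2) by (unfold t; eapply Rle_trans; apply Rmin_l).
    assert (Ht2 : t <= (rr - Cmod z) / 2) by (unfold t; eapply Rle_trans; [apply Rmin_l| apply Rmin_r]).
    assert (Ht3 : t <= e / (4 * (C + 1))) by (unfold t; apply Rmin_r).
    set (h := RtoC t).
    assert (Hh' : Cmod h = t) by (unfold h; rewrite Cmod_RtoC, Rabs_right; lra).
    specialize (Hh h ltac:(rewrite Hh'; lra)).
    assert (Hin : Cmod z + Cmod h <= rr) by lra.
    specialize (HF z h Hin).
    assert (Hz1 : Cmod (Cadd z h) < rr) by (pose proof (Cmod_add z h); lra).
    rewrite (Hpf _ Hz1), (Hpf _ Hz) in Hh.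
    set (X := Csub (F (Cadd z h)) (F z)) in *.
    assert (Q : Cmod (Csub (Cdiv X h) (F1 z)) <= C * t).
    { replace (Csub (Cdiv X h) (F1 z)) with (Cmul (Csub X (Cmul h (F1 z))) (Cinv h)).
      2:{ unfold h. generalize X (F1 z). intros. ceq; field; lra. }
      rewrite Cmod_mul, Cmod_inv. rewrite Hh'. 2:{ intro E; rewrite E, Cmod_z0 in Hh'. lra. }
      rewrite Hh' in HF. apply Rmult_le_reg_r with t; auto. rewrite Rmult_assoc, Rinv_l by lra. simpl in HF. nra. }
    assert (C * t <= e / 4).
    { assert (C * t <= (C + 1) * t) by lra. assert ((C + 1) * t <= (C + 1) * (e / (4 * (C + 1)))) by (apply Rmult_le_compat_l; lra).
      replace ((C + 1) * (e / (4 * (C + 1)))) with (e / 4) in H0 by (field; lra). lra. }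
    assert (EE : Csub l (F1 z) = Cadd (Csub (Cdiv X h) (F1 z)) (Copp (Csub (Cdiv X h) l))) by (generalize (Cdiv X h); intros; ceq; ring).
    pose proof (Cmod_add (Csub (Cdiv X h) (F1 z)) (Copp (Csub (Cdiv X h) l))) as TT.
    rewrite <- EE, Cmod_opp in TT. fold e in TT. lra. }
  apply Cmod_eq0 in E. replace l with (Cadd (Csub l (F1 z)) (F1 z)) by (ceq; ring). rewrite E. ceq; ring. Qed.
Definition ueps (Q : Cx -> Cx) eps z := N2 (Q z) + eps * N2 z.

Lemma ueps_deriv Q Q1 rr C1 c t v eps : HasD Q Q1 rr C1 -> 0 <= C1 -> Cmod (lin c t v) < rr ->
  derivable_pt_lim (fun s => ueps Q eps (lin c s v)) t (dN2 Q Q1 c v t + eps * dN2 Idf Onef c v t).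
Proof. intros H H0 H1. pose proof (N2_deriv Q Q1 rr C1 c t v H H0 H1) as A.
  pose proof (N2_deriv Idf Onef rr 0 c t v (HasD_Id rr) (Rle_refl 0) H1) as B.
  eapply dpl_ext2. 3: apply derivable_pt_lim_plus; [exact A | apply derivable_pt_lim_scal; exact B].
  intros; unfold ueps, plus_fct, mult_real_fct, Idf; reflexivity. reflexivity. Qed.

Lemma ueps_deriv2 Q Q1 Q2 rr C1 C2 c t v eps : HasD Q Q1 rr C1 -> 0 <= C1 -> HasD Q1 Q2 rr C2 -> 0 <= C2 ->
  Cmod (lin c t v) < rr ->
  derivable_pt_lim (fun s => dN2 Q Q1 c v s + eps * dN2 Idf Onef c v s) t
     (d2N2 Q Q1 Q2 c v t + eps * d2N2 Idf Onef Zerof c v t).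
Proof. intros H1 H2 H3 H4 H5.
  pose proof (dN2_deriv Q Q1 Q2 rr C1 C2 c t v H1 H2 H3 H4 H5) as A.
  pose proof (dN2_deriv Idf Onef Zerof rr 0 0 c t v (HasD_Id rr) (Rle_refl 0) (HasD_One rr) (Rle_refl 0) H5) as B.
  eapply dpl_ext2. 3: apply derivable_pt_lim_plus; [exact A | apply derivable_pt_lim_scal; exact B].
  intros; unfold plus_fct, mult_real_fct; reflexivity. reflexivity. Qed.

Lemma interior_no_max Q Q1 Q2 rr C1 C2 r eps c : HasD Q Q1 rr C1 -> 0 <= C1 -> HasD Q1 Q2 rr C2 -> 0 <= C2 ->
  r < rr -> 0 < eps -> Cmod c < r -> (forall z, Cmod z <= r -> ueps Q eps z <= ueps Q eps c) -> False.
Proof. intros H1 H2 H3 H4 Hr He Hc Hm.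
  set (D := fun v => d2N2 Q Q1 Q2 c v 0 + eps * d2N2 Idf Onef Zerof c v 0).
  assert (Gen : forall v, Cmod v = 1 -> 0 < D v -> False).
  { intros v Hv HD. set (dl := r - Cmod c).
    assert (Hin : forall t, - dl < t < dl -> Cmod (lin c t v) < r).
    { intros t Ht. pose proof (Cmod_lin c t v). rewrite Hv in H. assert (Rabs t < dl) by (unfold Rabs; destruct Rcase_abs; lra).
      unfold dl in *. lra. }
    apply (no_max2 (fun s => ueps Q eps (lin c s v)) (fun s => dN2 Q Q1 c v s + eps * dN2 Idf Onef c v s) (D v) dl).
    - unfold dl; lra.
    - intros t Ht. apply (ueps_deriv Q Q1 rr C1); auto. specialize (Hin t Ht). lra.
    - apply (ueps_deriv2 Q Q1 Q2 rr C1 C2); auto. rewrite lin0. lra.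
    - auto.
    - intros t Ht. rewrite lin0. apply Hm. specialize (Hin t Ht). lra. }
  assert (Hsum : D (1, 0) + D (0, 1) = 4 * N2 (Q1 c) + 4 * eps).
  { unfold D, d2N2. rewrite !lin0. unfold Idf, Onef, Zerof, N2. simpl. clear Gen. clearbody D. ring. }
  assert (0 <= N2 (Q1 c)) by (unfold N2; nra).
  assert (M1 : Cmod (1, 0) = 1) by (rewrite Cmod_Cx; replace (1^2+0^2) with 1 by ring; apply sqrt_1).
  assert (M2 : Cmod (0, 1) = 1) by (rewrite Cmod_Cx; replace (0^2+1^2) with 1 by ring; apply sqrt_1).
  destruct (Rlt_le_dec 0 (D (1, 0))).
  - apply (Gen (1, 0)); auto.
  - apply (Gen (0, 1)); auto. lra. Qed.
Lemma boundary_info Q Q1 rr C1 r eps c : HasD Q Q1 rr C1 -> 0 <= C1 -> 0 < r < rr -> 0 <= eps ->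
  Cmod c = r -> (forall z, Cmod z <= r -> ueps Q eps z <= ueps Q eps c) ->
  fst (Q c) * fst (Cmul c (Q1 c)) + snd (Q c) * snd (Cmul c (Q1 c)) >= - (eps * r ^ 2) /\
  fst (Q c) * snd (Cmul c (Q1 c)) - snd (Q c) * fst (Cmul c (Q1 c)) = 0.
Proof. intros HQ HC Hr He Hc Hm.
  set (a := fst (Q c) * fst (Cmul c (Q1 c)) + snd (Q c) * snd (Cmul c (Q1 c))).
  set (b := fst (Q c) * snd (Cmul c (Q1 c)) - snd (Q c) * fst (Cmul c (Q1 c))).
  assert (Nc : fst c ^ 2 + snd c ^ 2 = r ^ 2) by (rewrite <- Cmod_sq, Hc; auto).
  assert (Dir : forall w, fst w < 0 -> 2 * (fst w * a - snd w * b) + eps * (2 * fst w * r ^ 2) <= 0).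
  { intros w Hw.
    assert (E1 : dN2 Q Q1 c (Cmul c w) 0 = 2 * (fst w * a - snd w * b)).
    { unfold dN2, a, b. rewrite lin0. simpl. ring. }
    assert (E2 : dN2 Idf Onef c (Cmul c w) 0 = 2 * fst w * r ^ 2).
    { unfold dN2. rewrite lin0. rewrite <- Nc. unfold Idf, Onef. simpl. ring. }
    rewrite <- E1, <- E2.
    set (Nw := fst w ^ 2 + snd w ^ 2). assert (HNw : 0 < Nw) by (unfold Nw; nra).
    apply (right_max (fun s => ueps Q eps (lin c s (Cmul c w))) _ (- 2 * fst w / Nw)).
    - apply Rdiv_lt_0_compat; lra.
    - apply (ueps_deriv Q Q1 rr C1); auto. rewrite lin0; lra.
    - intros t Ht. rewrite lin0. apply Hm.
      replace (lin c t (Cmul c w)) with (Cmul c (Cadd Cone (Cmul (RtoC t) w))) by (unfold lin; ceq; ring).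
      rewrite Cmod_mul, Hc.
      assert (Cmod (Cadd Cone (Cmul (RtoC t) w)) <= 1).
      { assert (HC1 : Cmod Cone = 1) by (unfold Cmod, Cone; cbn [fst snd]; replace (1^2+0^2) with 1 by ring; apply sqrt_1).
        apply Rle_trans with (Cmod Cone); [|lra].
        apply (proj2 (Cmod_le_sq _ _)). unfold Cone, Cadd, Cmul, RtoC; simpl.
        assert (t * Nw < - 2 * fst w).
        { destruct Ht as [Ht1 Ht2]. apply Rmult_lt_compat_r with (r := Nw) in Ht2; auto.
          unfold Rdiv in Ht2. rewrite Rmult_assoc, Rinv_l, Rmult_1_r in Ht2 by lra. lra. }
        unfold Nw in *. destruct Ht. nra. }
      nra. }
  assert (Ha : a >= - (eps * r ^ 2)).
  { specialize (Dir (-1, 0) ltac:(simpl; lra)). simpl in Dir. lra. }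
  split; auto.
  assert (Hb : forall d, 0 < d -> Rabs b <= d * (a + eps * r ^ 2)).
  { intros d Hd. pose proof (Dir (- d, 1) ltac:(simpl; lra)). pose proof (Dir (- d, -1) ltac:(simpl; lra)).
    simpl in *. unfold Rabs; destruct Rcase_abs; nra. }
  destruct (Req_dec b 0) as [|Hb0]; auto. exfalso.
  assert (0 < Rabs b) by (apply Rabs_pos_lt; auto).
  set (d := Rabs b / (2 * (a + eps * r ^ 2 + 1))).
  assert (0 <= a + eps * r ^ 2) by lra.
  assert (Hd : 0 < d) by (unfold d; apply Rdiv_lt_0_compat; lra).
  specialize (Hb d Hd). unfold d in Hb.
  assert (Rabs b / (2 * (a + eps * r ^ 2 + 1)) * (a + eps * r ^ 2) < Rabs b).
  { replace (Rabs b / (2 * (a + eps * r ^ 2 + 1)) * (a + eps * r ^ 2)) with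
      (Rabs b * ((a + eps * r ^ 2) / (2 * (a + eps * r ^ 2 + 1)))) by (field; lra).
    assert ((a + eps * r ^ 2) / (2 * (a + eps * r ^ 2 + 1)) < 1).
    { apply Rmult_lt_reg_r with (2 * (a + eps * r ^ 2 + 1)). lra. unfold Rdiv. rewrite Rmult_assoc, Rinv_l; lra. }
    nra. }
  lra. Qed.

Lemma arith_key q1 q2 p1 p2 n1 n2 e : n1 < 0 -> 0 <= e -> q1 * p1 + q2 * p2 >= - e -> q1 * p2 - q2 * p1 = 0 ->
  (n1 ^ 2 + n2 ^ 2) * (q1 ^ 2 + q2 ^ 2) <=
  ((n1 * q1 - n2 * q2 - p1) ^ 2 + (n1 * q2 + n2 * q1 - p2) ^ 2) + 2 * sqrt (n1 ^ 2 + n2 ^ 2) * e.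
Proof. intros Hn He Ha Hb.
  set (x2 := q1 ^ 2 + q2 ^ 2). set (a := q1 * p1 + q2 * p2). set (b := q1 * p2 - q2 * p1).
  set (S := (n1 * q1 - n2 * q2 - p1) ^ 2 + (n1 * q2 + n2 * q1 - p2) ^ 2).
  set (N := sqrt (n1 ^ 2 + n2 ^ 2)).
  assert (HN2 : N * N = n1 ^ 2 + n2 ^ 2) by (unfold N; apply sqrt_sqrt; nra).
  assert (HN : - n1 <= N). { assert (0 <= N) by apply sqrt_pos. nra. }
  assert (Id : x2 * S = (n1 * x2 - a) ^ 2 + (n2 * x2 - b) ^ 2) by (unfold x2, S, a, b; ring).
  fold b in Hb. rewrite Hb in Id.
  assert (HS : 0 <= S) by (unfold S; apply Rplus_le_le_0_compat; apply pow2_ge_0).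
  assert (0 <= N) by apply sqrt_pos.
  destruct (Req_dec x2 0) as [E|E].
  - rewrite E. nra.
  - assert (Hx : 0 < x2) by (unfold x2 in *; nra).
    assert (x2 * S >= (n1 ^ 2 + n2 ^ 2) * x2 * x2 - 2 * N * x2 * e).
    { rewrite Id. assert (- n1 * x2 * a >= - n1 * x2 * (- e)).
      { assert (0 <= - n1 * x2) by nra. assert (a + e >= 0) by (unfold a; lra). nra. }
      assert (- n1 * x2 * e <= N * x2 * e) by (apply Rmult_le_compat_r; auto; nra).
      nra. }
    apply Rmult_le_reg_l with x2; auto. nra. Qed.
Lemma jack_bound Q Q1 Q2 rr C1 C2 r B0 B1 nu M n :
  HasD Q Q1 rr C1 -> 0 <= C1 -> HasD Q1 Q2 rr C2 -> 0 <= C2 -> 0 < r < rr ->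
  (forall z, Cmod z <= r -> Cmod (Q z) <= B0 /\ Cmod (Q1 z) <= B1) -> fst nu < 0 ->
  (forall z, Cmod z <= r -> Cmod z ^ n * Cmod (Csub (Cmul nu (Q z)) (Cmul z (Q1 z))) < M) ->
  forall z, Cmod z <= r -> N2 (Q z) <= (M / (r ^ n * Cmod nu)) ^ 2.
Proof. intros HQ HC1 HQ1 HC2 Hr HB Hnu Hkey z1 Hz1.
  apply Rnot_lt_le. intro HY.
  set (Nv := Cmod nu) in *. set (Rn := r ^ n) in *.
  assert (HNv : 0 < Nv) by (unfold Nv; pose proof (Cmod_fst nu); unfold Rabs in H; destruct Rcase_abs in H; lra).
  assert (HRn : 0 < Rn) by (unfold Rn; apply pow_lt; lra).
  set (T := (M / (Rn * Nv)) ^ 2) in *. set (Y2 := N2 (Q z1)) in *.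
  assert (HT0 : 0 <= T) by (unfold T; apply pow2_ge_0).
  set (eps := (Y2 - T) / (2 * (r ^ 2 * (1 + 2 / Nv)))).
  assert (Hr2 : 0 < r ^ 2) by nra.
  assert (H2N : 0 < 1 + 2 / Nv) by (assert (0 < 2 / Nv) by (apply Rdiv_lt_0_compat; lra); lra).
  assert (Heps : 0 < eps) by (unfold eps; apply Rdiv_lt_0_compat; [lra| nra]).
  assert (HB0 : 0 <= B0) by (destruct (HB z1 Hz1) as [H _]; pose proof (Cmod_ge0 (Q z1)); lra).
  destruct (Q_lip Q Q1 rr C1 r B0 B1 HQ HC1 Hr HB) as [L [HL HLip]].
  destruct (disk_max (ueps Q eps) r (2 * B0 * L + eps * (2 * r))) as [c [Hc Hmax]].
  { lra. }
  { assert (0 <= 2 * B0 * L) by (apply Rmult_le_pos; lra). nra. }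
  { intros z w Hz Hw. unfold ueps.
    replace (N2 (Q z) + eps * N2 z - (N2 (Q w) + eps * N2 w)) with
      ((N2 (Q z) - N2 (Q w)) + eps * (N2 z - N2 w)) by ring.
    eapply Rle_trans. apply Rabs_triang. rewrite Rabs_mult, (Rabs_right eps) by lra.
    pose proof (N2_lip (Q z) (Q w) B0 (proj1 (HB z Hz)) (proj1 (HB w Hw))).
    pose proof (N2_lip z w r Hz Hw).
    pose proof (HLip w z Hw Hz).
    pose proof (Cmod_ge0 (Csub z w)).
    assert (2 * B0 * Cmod (Csub (Q z) (Q w)) <= 2 * B0 * (L * Cmod (Csub z w))) by (apply Rmult_le_compat_l; lra).
    assert (eps * Rabs (N2 z - N2 w) <= eps * (2 * r * Cmod (Csub z w))) by (apply Rmult_le_compat_l; lra).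
    nra. }
  destruct (Rlt_le_dec (Cmod c) r) as [Hlt | Hge].
  { apply (interior_no_max Q Q1 Q2 rr C1 C2 r eps c); auto; lra. }
  assert (Hcr : Cmod c = r) by lra.
  destruct (boundary_info Q Q1 rr C1 r eps c HQ HC1 Hr ltac:(lra) Hcr Hmax) as [Ha Hb].
  specialize (Hkey c Hc). rewrite Hcr in Hkey. fold Rn in Hkey.
  set (X := Csub (Cmul nu (Q c)) (Cmul c (Q1 c))) in *.
  assert (SX : N2 X = (fst nu * fst (Q c) - snd nu * snd (Q c) - fst (Cmul c (Q1 c))) ^ 2 +
                      (fst nu * snd (Q c) + snd nu * fst (Q c) - snd (Cmul c (Q1 c))) ^ 2).
  { unfold X, N2. generalize (Cmul c (Q1 c)). intros. simpl. ring. }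
  pose proof (arith_key (fst (Q c)) (snd (Q c)) (fst (Cmul c (Q1 c))) (snd (Cmul c (Q1 c))) (fst nu) (snd nu)
    (eps * r ^ 2) Hnu ltac:(nra) Ha Hb) as AK.
  rewrite <- SX in AK.
  assert (EN : fst nu ^ 2 + snd nu ^ 2 = Nv ^ 2) by (unfold Nv; rewrite Cmod_sq; auto).
  rewrite EN in AK. rewrite sqrt_pow2 in AK by lra.
  set (x2 := fst (Q c) ^ 2 + snd (Q c) ^ 2) in *.
  assert (HS : Rn ^ 2 * N2 X < M ^ 2).
  { rewrite N2_Cmod. pose proof (Cmod_ge0 X).
    assert (0 <= Rn * Cmod X) by nra. replace (Rn ^ 2 * Cmod X ^ 2) with ((Rn * Cmod X) ^ 2) by ring.
    assert (Rn * Cmod X < M) by lra. nra. }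
  assert (ET : T * (Rn * Nv) ^ 2 = M ^ 2) by (unfold T; field; split; lra).
  set (W := eps * r ^ 2) in *.
  assert (Hx2 : x2 < T + 2 * W / Nv).
  { assert (K : 0 < (Rn * Nv) ^ 2) by (apply pow_lt; nra).
    apply Rmult_lt_reg_r with ((Rn * Nv) ^ 2); auto.
    replace ((T + 2 * W / Nv) * (Rn * Nv) ^ 2) with (T * (Rn * Nv) ^ 2 + 2 * W * Nv * Rn ^ 2) by (field; lra).
    rewrite ET.
    assert (Rn ^ 2 * (Nv ^ 2 * x2) <= Rn ^ 2 * (N2 X + 2 * Nv * W)) by (apply Rmult_le_compat_l; [nra| lra]).
    nra. }
  assert (HW : W * (1 + 2 / Nv) = (Y2 - T) / 2).
  { unfold W, eps. field. split; lra. }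
  assert (HM : Y2 + eps * N2 z1 <= x2 + W).
  { specialize (Hmax z1 Hz1). unfold ueps in Hmax. unfold W.
    assert (N2 c = r ^ 2) by (rewrite N2_Cmod, Hcr; auto). rewrite H in Hmax.
    assert (N2 (Q c) = x2) by (unfold x2, N2; auto). unfold Y2. lra. }
  assert (0 <= N2 z1) by (unfold N2; nra).
  assert (0 <= eps * N2 z1) by nra.
  replace (W * (1 + 2 / Nv)) with (W + 2 * W / Nv) in HW by (field; lra).
  lra. Qed.
Lemma bern x n : 0 <= x <= 1 -> 1 - INR n * x <= (1 - x) ^ n.
Proof. intro Hx. induction n. simpl. lra. rewrite S_INR. simpl.
  assert ((1 - x) * (1 - INR n * x) <= (1 - x) * (1 - x) ^ n) by (apply Rmult_le_compat_l; lra).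
  pose proof (pos_INR n). nra. Qed.

Lemma Cinv_ne0 z : z <> Cz0 -> fst z ^ 2 + snd z ^ 2 <> 0.
Proof. intros H E. apply H. destruct z as [x y]. simpl in E.
  assert (x = 0) by nra. assert (y = 0) by nra. subst. reflexivity. Qed.

Theorem lemma2 (n : nat) (mu lambda : Cx) (p p' : Cx -> Cx) :
  (1 <= n)%nat ->
  mu <> Cz0 -> Re mu < INR n ->
  0 < Cmod lambda -> Cmod lambda <= 1 ->
  in_H Cone n p ->
  (forall z, inU z -> Cderiv_at p z (p' z)) ->
  subord (fun z => Csub (p z) (Cmul (Cinv mu) (Cmul z (p' z))))
         (fun z => Cadd Cone (Cmul lambda z)) ->
  (forall lambda1 : Cx,
     Cmod lambda1 = Cmod lambda * Cmod mu / Cmod (Csub (RtoC (INR n)) mu) ->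
     subord p (fun z => Cadd Cone (Cmul lambda1 z))) /\
  (forall z, inU z ->
     Cmod (Csub (p z) Cone) < Cmod lambda * Cmod mu / Cmod (Csub (RtoC (INR n)) mu)).
Proof.
  intros Hn Hmu Hre Hl0 Hl1 HH Hd Hsub.
  destruct n as [|m]; [lia|].
  destruct HH as [a [Ha0 [Haz Hser]]].
  assert (Ra : rad1 a) by (apply (rad1_of_cv a p); auto).
  set (b := bsh a m).
  assert (Rb : rad1 b) by (apply rad1_shift; auto).
  assert (Rb1 : rad1 (der b)) by (apply rad1_der; auto).
  assert (Rb2 : rad1 (der (der b))) by (apply rad1_der; auto).
  set (Q := SF b). set (Q1 := SF (der b)). set (Q2 := SF (der (der b))).
  assert (Hp : forall z, inU z -> p z = Cadd Cone (Cmul (Cpow z (S m)) (Q z))).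
  { intros z Hz. apply (Ccv_unique (fun N => psum a z (N + S m))).
    - apply Ccv_shift. exact (Hser z Hz).
    - apply (Ccv_ev (fun N => Cadd Cone (Cmul (Cpow z (S m)) (psum b z N)))) with 0%nat.
      { intros N _. rewrite L2; auto. }
      apply Ccv_add. apply Ccv_const. apply Ccv_mulc. apply SF_spec; auto. }
  assert (Hp' : forall z, inU z -> p' z = SF (der a) z).
  { intros z Hz. unfold inU in Hz. set (rr := (1 + Cmod z) / 2).
    destruct (HasD_SF a rr Ra ltac:(unfold rr; pose proof (Cmod_ge0 z); lra)) as [C [HC HD]].
    apply (deriv_unique p (SF a) (SF (der a)) z (p' z) rr C); auto.
    - unfold rr; lra.
    - intros w Hw. apply (Ccv_unique (psum a w)). exact (Hser w ltac:(unfold inU, rr in *; lra)).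
      apply SF_spec; auto. unfold rr in *; lra. }
  assert (Hzp : forall z, inU z -> Cmul z (p' z) =
      Cmul (Cpow z (S m)) (Cadd (Cmul (RtoC (INR (S m))) (Q z)) (Cmul z (Q1 z)))).
  { intros z Hz. rewrite (Hp' z Hz).
    apply (Ccv_unique (fun N => Cmul z (psum (der a) z (N + S m)))).
    - apply Ccv_mulc. apply Ccv_shift. apply SF_spec; auto. apply rad1_der; auto.
    - apply (Ccv_ev (fun N => Cmul (Cpow z (S m)) (Cadd (Cmul (RtoC (INR (S m))) (psum b z (S N)))
                                                         (Cmul z (psum (der b) z N))))) with 0%nat.
      { intros N _. rewrite (L5 a z (N + S m)). change (S (N + S m)) with (S N + S m)%nat. rewrite (L4 a m Haz z N). reflexivity. }
      apply Ccv_mulc. apply Ccv_add.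
      + apply Ccv_mulc. apply (Ccv_S (psum b z)). apply SF_spec; auto.
      + apply Ccv_mulc. apply SF_spec; auto. }
  destruct Hsub as [w [Hwa [Hw0 [Hw1 Hwe]]]].
  set (nu := Csub mu (RtoC (INR (S m)))).
  set (M := Cmod mu * Cmod lambda).
  assert (Hmu0 := Cinv_ne0 mu Hmu).
  assert (Hkey : forall z, inU z -> Cmod z ^ S m * Cmod (Csub (Cmul nu (Q z)) (Cmul z (Q1 z))) < M).
  { intros z Hz. specialize (Hwe z Hz). cbv beta in Hwe.
    rewrite (Hp z Hz), (Hzp z Hz) in Hwe.
    assert (E : Cmul (Cpow z (S m)) (Csub (Cmul nu (Q z)) (Cmul z (Q1 z))) =
      Cmul mu (Csub (Csub (Cadd Cone (Cmul (Cpow z (S m)) (Q z)))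
        (Cmul (Cinv mu) (Cmul (Cpow z (S m)) (Cadd (Cmul (RtoC (INR (S m))) (Q z)) (Cmul z (Q1 z)))))) Cone)).
    { unfold nu. generalize (Cpow z (S m)) (Q z) (Q1 z) (INR (S m)). intros.
      destruct mu as [m1 m2]. simpl in Hmu0. ceq; field; contradict Hmu0; nra. }
    rewrite Hwe in E.
    replace (Csub (Cadd Cone (Cmul lambda (w z))) Cone) with (Cmul lambda (w z)) in E by (generalize (w z); intros; ceq; ring).
    apply (f_equal Cmod) in E. rewrite !Cmod_mul, Cmod_pow in E. rewrite E.
    unfold M. specialize (Hw1 z Hz). pose proof (Cmod_pos mu Hmu).
    assert (Cmod lambda * Cmod (w z) < Cmod lambda * 1) by (apply Rmult_lt_compat_l; lra). nra. }
  assert (Hnu : fst nu < 0) by (unfold nu, Csub, Cadd, Copp, RtoC; cbn [fst]; unfold Re in Hre; lra).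
  assert (HNv : 0 < Cmod nu) by (pose proof (Cmod_fst nu); unfold Rabs in H; destruct Rcase_abs in H; lra).
  assert (HM : 0 < M) by (unfold M; pose proof (Cmod_pos mu Hmu); nra).
  set (K := M / Cmod nu).
  assert (HK : 0 < K) by (unfold K; apply Rdiv_lt_0_compat; auto).
  assert (Hjr : forall r, 0 < r < 1 -> forall z, Cmod z <= r -> N2 (Q z) <= (M / (r ^ S m * Cmod nu)) ^ 2).
  { intros r Hr. set (rr := (1 + r) / 2).
    destruct (HasD_SF b rr Rb ltac:(unfold rr; lra)) as [C1 [HC1 HD1]].
    destruct (HasD_SF (der b) rr Rb1 ltac:(unfold rr; lra)) as [C2 [HC2 HD2]].
    destruct (SF_bound b r Rb ltac:(lra)) as [B0 HB0].
    destruct (SF_bound (der b) r Rb1 ltac:(lra)) as [B1 HB1].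
    apply (jack_bound Q Q1 Q2 rr C1 C2 r B0 B1); auto.
    - unfold rr; lra.
    - intros z Hz. apply Hkey. unfold inU. lra. }
  assert (HQ : forall z, inU z -> Cmod (Q z) <= K).
  { intros z Hz. unfold inU in Hz. apply Rnot_lt_le. intro HY.
    set (Y := Cmod (Q z)) in *.
    set (th := K / Y).
    assert (Hth : 0 < th < 1).
    { unfold th. split. apply Rdiv_lt_0_compat; lra.
      apply Rmult_lt_reg_r with Y. lra. unfold Rdiv. rewrite Rmult_assoc, Rinv_l; lra. }
    pose proof (pos_INR m). rewrite <- S_INR in H || idtac.
    assert (Hn0 : 0 < INR (S m)) by (rewrite S_INR; lra).
    set (s := (1 - th) / (2 * INR (S m))).
    assert (Hs : 0 < s) by (unfold s; apply Rdiv_lt_0_compat; lra).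
    assert (Hs1 : s <= 1 / 2).
    { unfold s. apply Rmult_le_reg_r with (2 * INR (S m)). lra. unfold Rdiv.
      rewrite Rmult_assoc, Rinv_l by lra. rewrite S_INR. lra. }
    set (r := Rmax (Rmax (Cmod z) (1 / 2)) (1 - s)).
    assert (Hr1 : r < 1). { unfold r. repeat apply Rmax_lub_lt; lra. }
    assert (Hr0 : 1 / 2 <= r) by (unfold r; eapply Rle_trans; [apply Rmax_r| apply Rmax_l]).
    assert (Hrz : Cmod z <= r) by (unfold r; eapply Rle_trans; [apply Rmax_l| apply Rmax_l]).
    assert (Hrs : 1 - s <= r) by (unfold r; apply Rmax_r).
    assert (Hpow : th < r ^ S m).
    { pose proof (bern (1 - r) (S m) ltac:(lra)). replace (1 - (1 - r)) with r in H0 by ring.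
      assert (INR (S m) * (1 - r) <= INR (S m) * s) by (apply Rmult_le_compat_l; lra).
      assert (INR (S m) * s = (1 - th) / 2) by (unfold s; field; lra). lra. }
    specialize (Hjr r ltac:(lra) z Hrz).
    rewrite N2_Cmod in Hjr. fold Y in Hjr.
    assert (HRn : 0 < r ^ S m) by (apply pow_lt; lra).
    assert (M / (r ^ S m * Cmod nu) < Y).
    { replace (M / (r ^ S m * Cmod nu)) with (K / r ^ S m) by (unfold K; field; lra).
      apply Rmult_lt_reg_r with (r ^ S m); auto. unfold Rdiv. rewrite Rmult_assoc, Rinv_l by lra.
      unfold th in Hpow. apply Rmult_lt_compat_l with (r := Y) in Hpow; [|lra].
      replace (Y * (K / Y)) with K in Hpow by (field; lra). lra. }
    assert (0 < M / (r ^ S m * Cmod nu)) by (apply Rdiv_lt_0_compat; nra).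
    nra. }
  assert (EK : Cmod lambda * Cmod mu / Cmod (Csub (RtoC (INR (S m))) mu) = K).
  { unfold K, M, nu. rewrite (Cmod_sub_sym (RtoC (INR (S m))) mu). unfold Rdiv. ring. }
  rewrite EK.
  assert (Part2 : forall z, inU z -> Cmod (Csub (p z) Cone) < K).
  { intros z Hz. rewrite (Hp z Hz).
    replace (Csub (Cadd Cone (Cmul (Cpow z (S m)) (Q z))) Cone) with (Cmul (Cpow z (S m)) (Q z))
      by (generalize (Cmul (Cpow z (S m)) (Q z)); intros; ceq; ring).
    rewrite Cmod_mul, Cmod_pow. specialize (HQ z Hz). unfold inU in Hz.
    assert (Cmod z ^ S m < 1) by (apply Cmod_lt_pow; [split; [apply Cmod_ge0| auto]| lia]).
    pose proof (pow_le (Cmod z) (S m) (Cmod_ge0 z)). pose proof (Cmod_ge0 (Q z)). nra. }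
  split; auto.
  intros l1 Hl1'.
  assert (Hl1ne : l1 <> Cz0) by (intro E; rewrite E, Cmod_z0 in Hl1'; lra).
  assert (Hl10 := Cinv_ne0 l1 Hl1ne).
  exists (fun z => Cmul (Cinv l1) (Csub (p z) Cone)).
  split; [|split; [|split]].
  - exists (fun k => match k with O => Cz0 | S _ => Cmul (Cinv l1) (a k) end).
    intros z Hz.
    apply (Ccv_ev (fun N => Cmul (Cinv l1) (Csub (psum a z N) Cone))) with 0%nat.
    { intros N _. unfold psum. induction N.
      - simpl. rewrite Ha0. generalize (Cinv l1). intros. ceq; ring.
      - simpl Csum. rewrite <- IHN by lia. generalize (Cinv l1) (a (S N)) (Cpow z (S N))
          (Csum (fun k : nat => Cmul (a k) (Cpow z k)) N). intros. ceq; ring. }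
    apply Ccv_mulc. apply Ccv_sub. exact (Hser z Hz). apply Ccv_const.
  - cbv beta. rewrite Hp by (unfold inU; rewrite Cmod_z0; lra). rewrite Cpow_z0.
    generalize (Cinv l1) (Q Cz0). intros. ceq; ring.
  - intros z Hz. cbv beta. rewrite Cmod_mul, Cmod_inv by auto. rewrite Hl1'.
    specialize (Part2 z Hz). apply Rmult_lt_reg_l with K; auto.
    rewrite <- Rmult_assoc, Rinv_r, Rmult_1_l, Rmult_1_r by lra. auto.
  - intros z Hz. cbv beta. generalize (p z). intros. destruct l1 as [l1 l2]. simpl in Hl10. ceq; field; contradict Hl10; nra.
Qed.
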